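(* Let $N\geq 0$ be an integer and $s_N(x)=\sum_{j=0}^{N-1}\frac{|E_{2j}|}{(2j)!}x^{2j}$. Then for all $0<x<\pi/2$, \[ \frac{|E_{2N}|}{(2N)!}x^{2N-1}\tan x<\sec x-s_N(x)<\left(\frac{2}{\pi}\right)^{2N-1}x^{2N-1}\tan x, \] where the constants $|E_{2N}|/(2N)!$ and $(2/\pi)^{2N-1}$ are the best possible.
   Context: The Euler numbers $E_n$ are defined by $\sec t=\sum_{n=0}^\infty E_n\frac{t^n}{n!}$ for $|t|<\pi$. An empty sum is understood to be zero. *)

(* Defs.v *)
From Stdlib Require Import Reals Lra Lia ZArith.
Open Scope R_scope.

Definition sec (t : R) : R := / cos t.

(* E is a sequence of Euler numbers: sec t = sum_n E n t^n / n! near 0.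
   The Maclaurin series of sec has radius pi/2, so we require the identity
   on |t| < pi/2 (this determines E uniquely). *)
Definition is_Euler_seq (E : nat -> R) : Prop :=
  forall t : R, Rabs t < PI / 2 ->
    infinite_sum (fun n => E n * t ^ n / INR (fact n)) (sec t).

Fixpoint s_part (E : nat -> R) (N : nat) (x : R) : R :=
  match N with
  | O => 0
  | S M => s_part E M x + Rabs (E (2 * M)%nat) / INR (fact (2 * M)) * x ^ (2 * M)
  end.

(* Main.v *)
Require Import Defs.
From Stdlib Require Import Reals ZArith Lra Lia.
From Coquelicot Require Import Coquelicot.
Open Scope R_scope.


Fixpoint Sc (N : nat) (x : R) : R :=
  match N with
  | O => / x
  | S n => Sc n x + / (x + INR (S n)) + / (x - INR (S n))
  end.

Lemma Sc_S : forall n x, Sc (S n) x = Sc n x + / (x + INR (S n)) + / (x - INR (S n)).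
Proof. reflexivity. Qed.
Lemma Sc_O : forall x, Sc O x = / x.
Proof. reflexivity. Qed.

Lemma inv_eq : forall a b, a = b -> / a = / b.
Proof. intros; subst; auto. Qed.

Lemma Sc_shift : forall N x, Sc N (x + 1) = Sc N x - / (x - INR N) + / (x + INR N + 1).
Proof.
  induction N as [|n IH]; intros x.
  - rewrite (Sc_O (x+1)), (Sc_O x). simpl INR. replace (x - 0) with x by ring. replace (x + 0 + 1) with (x+1) by ring. ring.
  - repeat rewrite Sc_S. rewrite IH. rewrite S_INR.
    replace (x + 1 + (INR n + 1)) with (x + INR n + 1 + 1) by ring.
    replace (x + 1 - (INR n + 1)) with (x - INR n) by ring.
    replace (x + (INR n + 1)) with (x + INR n + 1) by ring.
    ring.
Qed.

Lemma inv_half : forall y, / (y / 2) = 2 * / y.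
Proof. intros. unfold Rdiv. rewrite Rinv_mult, Rinv_inv. ring. Qed.

Lemma Sc_dup : forall N x,
  Sc N (x / 2) + Sc N ((x + 1) / 2) = 2 * Sc (2 * N) x + 2 * / (x + INR (2 * N) + 1).
Proof.
  induction N as [|n IH]; intros x.
  - change (2 * 0)%nat with 0%nat. cbn [Sc]. simpl INR. repeat rewrite inv_half. replace (x + 0 + 1) with (x + 1) by ring. ring.
  - replace (2 * S n)%nat with (S (S (2 * n))) by lia.
    repeat rewrite Sc_S.
    assert (E1 : Sc n (x / 2) + / (x / 2 + INR (S n)) + / (x / 2 - INR (S n)) +
      (Sc n ((x + 1) / 2) + / ((x + 1) / 2 + INR (S n)) + / ((x + 1) / 2 - INR (S n)))
      = (Sc n (x / 2) + Sc n ((x + 1) / 2)) + (/ (x / 2 + INR (S n)) + / (x / 2 - INR (S n)) +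
         / ((x + 1) / 2 + INR (S n)) + / ((x + 1) / 2 - INR (S n)))) by ring.
    rewrite E1, IH. clear E1.
    repeat rewrite S_INR. rewrite mult_INR. replace (INR 2) with 2 by (simpl; ring).
    replace (x / 2 + (INR n + 1)) with ((x + 2 * INR n + 2) / 2) by field.
    replace (x / 2 - (INR n + 1)) with ((x - 2 * INR n - 2) / 2) by field.
    replace ((x + 1) / 2 + (INR n + 1)) with ((x + 2 * INR n + 3) / 2) by field.
    replace ((x + 1) / 2 - (INR n + 1)) with ((x - 2 * INR n - 1) / 2) by field.
    repeat rewrite inv_half.
    replace (x + (2 * INR n + 1 + 1)) with (x + 2 * INR n + 2) by ring.
    replace (x - (2 * INR n + 1 + 1)) with (x - 2 * INR n - 2) by ring.
    replace (x + (2 * INR n + 1)) with (x + 2 * INR n + 1) by ring.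
    replace (x - (2 * INR n + 1)) with (x - 2 * INR n - 1) by ring.
    replace (x + (2 * INR n + 1 + 1) + 1) with (x + 2 * INR n + 3) by ring.
    replace (x + 2 * INR n + 2 + 1) with (x + 2 * INR n + 3) by ring. ring.
Qed.

Lemma Sc_0 : forall N, Sc N 0 = 0.
Proof.
  induction N.
  - apply Rinv_0.
  - rewrite Sc_S, IHN. replace (0 - INR (S N)) with (- (0 + INR (S N))) by ring.
    rewrite Rinv_opp. ring.
Qed.


Ltac req := match goal with |- ?a = ?b => change (@eq R a b) end.

Lemma nat_big : forall A, exists n : nat, A < INR n.
Proof. intros A. destruct (INR_archimed 1 A) as [n Hn]; [lra|]. exists n. lra. Qed.

Lemma lim_inv_lin : forall a, is_lim_seq (fun n => / (INR n + a)) 0.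
Proof.
  intros a.
  assert (H : is_lim_seq (fun n => INR n + a) p_infty).
  { eapply is_lim_seq_plus. apply is_lim_seq_INR. apply is_lim_seq_const. simpl. constructor. }
  pose proof (is_lim_seq_inv _ _ H) as H2. simpl in H2. apply H2. discriminate.
Qed.

Definition tel (k : nat) : R := / ((INR k + 1) * (INR k + 2)).

Lemma tel_pos : forall k, 0 < tel k.
Proof. intros. unfold tel. pose proof (pos_INR k). apply Rinv_0_lt_compat. nra. Qed.

Lemma sum_tel : forall n, sum_n tel n = 1 - / (INR n + 2).
Proof.
  induction n.
  - rewrite sum_O. unfold tel. req. simpl. field.
  - rewrite sum_Sn, IHn. unfold tel. change plus with Rplus. rewrite S_INR.
    pose proof (pos_INR n). req. field. lra.
Qed.

Lemma is_series_tel : is_series tel 1.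
Proof.
  unfold is_series. change (is_lim_seq (sum_n tel) 1).
  apply is_lim_seq_ext with (fun n => 1 - / (INR n + 2)).
  { intros; rewrite sum_tel; auto. }
  replace (Finite 1) with (Finite (1 - 0)) by (f_equal; ring).
  apply is_lim_seq_minus'. apply is_lim_seq_const. apply lim_inv_lin.
Qed.

Lemma ex_series_tel : ex_series tel.
Proof. exists 1. apply is_series_tel. Qed.

Lemma Series_tel : Series tel = 1.
Proof. apply is_series_unique, is_series_tel. Qed.

Lemma ex_series_dom : forall (a : nat -> R) C, (forall k, Rabs (a k) <= C * tel k) -> ex_series a.
Proof.
  intros a C H. apply (ex_series_le a (fun k => C * tel k)).
  - intros n. apply H.
  - exists (C * 1). apply (is_series_scal_l C tel 1). apply is_series_tel.
Qed.

Definition bt (x : R) (k : nat) : R := / (x + INR (S k)) + / (x - INR (S k)).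

Lemma Sc_sum : forall N x, Sc (S N) x = / x + sum_n (bt x) N.
Proof.
  induction N; intros x.
  - rewrite sum_O. rewrite Sc_S. unfold bt. simpl Sc. ring.
  - rewrite Sc_S, IHN, sum_Sn. unfold bt. change plus with Rplus. ring.
Qed.

Lemma ex_series_bt : forall x, ex_series (bt x).
Proof.
  intros x. destruct (nat_big (2 * Rabs x + 1)) as [n0 Hn0].
  apply (ex_series_incr_n _ n0).
  apply ex_series_dom with (C := 6 * Rabs x).
  intros k. unfold bt. set (m := INR (S (n0 + k))).
  assert (Hm : INR n0 + INR k + 1 = m) by (unfold m; rewrite S_INR, plus_INR; ring).
  pose proof (pos_INR k). pose proof (pos_INR n0). pose proof (Rabs_pos x).
  assert (Hx1 : - Rabs x <= x <= Rabs x) by (unfold Rabs; destruct (Rcase_abs x); lra).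
  assert (E : / (x + m) + / (x - m) = 2 * x / ((x + m) * (x - m))).
  { field. split; lra. }
  rewrite E. unfold tel. rewrite Rabs_div by nra.
  rewrite Rabs_mult, Rabs_mult, (Rabs_right 2) by lra.
  rewrite (Rabs_right (x+m)) by lra. rewrite (Rabs_left (x-m)) by lra.
  unfold Rdiv. apply Rle_trans with (2 * Rabs x * / ((INR k + 1) * (INR k + 2) * (3/8))).
  - apply Rmult_le_compat_l. lra. apply Rinv_le_contravar. nra.
    assert (m >= INR k + 1) by lra. assert (x * x <= Rabs x * Rabs x) by nra.
    assert (Rabs x * 2 <= m) by lra. nra.
  - assert (HP : 0 < (INR k + 1) * (INR k + 2)) by nra.
    replace (/ ((INR k + 1) * (INR k + 2) * (3/8))) with (/ ((INR k + 1) * (INR k + 2)) * (8/3))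
      by (field; lra).
    pose proof (Rinv_0_lt_compat _ HP). nra.
Qed.

Definition Fc (x : R) : R := real (Lim_seq (fun N => Sc N x)).

Lemma Sc_cv : forall x, is_lim_seq (fun N => Sc N x) (Fc x).
Proof.
  intros x. destruct (ex_series_bt x) as [s Hs].
  assert (H : is_lim_seq (fun N => Sc N x) (/ x + s)).
  { apply is_lim_seq_incr_1. apply is_lim_seq_ext with (fun N => / x + sum_n (bt x) N).
    intros; rewrite Sc_sum; auto.
    apply is_lim_seq_plus'. apply is_lim_seq_const. apply Hs. }
  unfold Fc. rewrite (is_lim_seq_unique _ _ H). simpl. auto.
Qed.

Lemma Fc_shift : forall x, Fc (x + 1) = Fc x.
Proof.
  intros x.
  assert (H : is_lim_seq (fun N => Sc N (x + 1)) (Fc x - 0 + 0)).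
  { apply is_lim_seq_ext with (fun N => Sc N x - / (x - INR N) + / (INR N + (x + 1))).
    { intros N. rewrite Sc_shift. f_equal. f_equal. ring. }
    apply is_lim_seq_plus'. apply is_lim_seq_minus'. apply Sc_cv.
    apply is_lim_seq_ext with (fun N => - / (INR N + - x)).
    { intros N. rewrite <- Rinv_opp. f_equal. ring. }
    pose proof (proj1 (is_lim_seq_opp _ _) (lim_inv_lin (-x))) as Hh. simpl in Hh.
    rewrite Ropp_0 in Hh. exact Hh.
    apply lim_inv_lin. }
  replace (Fc x) with (Fc x - 0 + 0) by ring.
  apply is_lim_seq_unique in H. unfold Fc at 1. rewrite H. simpl. auto.
Qed.

Lemma Fc_0 : Fc 0 = 0.
Proof.
  assert (H : is_lim_seq (fun N => Sc N 0) 0).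
  { apply is_lim_seq_ext with (fun _ => 0). intros; rewrite Sc_0; auto. apply is_lim_seq_const. }
  unfold Fc. rewrite (is_lim_seq_unique _ _ H). auto.
Qed.

Lemma Fc_dup : forall x, Fc (x / 2) + Fc ((x + 1) / 2) = 2 * Fc x.
Proof.
  intros x.
  assert (H1 : is_lim_seq (fun N => Sc N (x / 2) + Sc N ((x + 1) / 2)) (Fc (x/2) + Fc ((x+1)/2))).
  { apply is_lim_seq_plus'; apply Sc_cv. }
  assert (H2 : is_lim_seq (fun N => Sc N (x / 2) + Sc N ((x + 1) / 2)) (2 * Fc x + 2 * (/ 2 * 0))).
  { apply is_lim_seq_ext with (fun N => 2 * Sc (2 * N) x + 2 * (/ 2 * / (INR N + (x + 1) / 2))).
    { intros N. rewrite Sc_dup. f_equal. f_equal. rewrite <- Rinv_mult. f_equal.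
      rewrite mult_INR. simpl INR. field. }
    apply is_lim_seq_plus'.
    - apply is_lim_seq_scal_l with (lu := Fc x).
      apply (is_lim_seq_subseq (fun N => Sc N x) (Fc x) (fun N => (2 * N)%nat)).
      apply eventually_subseq. intros; lia. apply Sc_cv.
    - apply is_lim_seq_scal_l with (lu := Finite (/ 2 * 0)).
      apply is_lim_seq_scal_l with (lu := Finite 0). apply lim_inv_lin. }
  pose proof (is_lim_seq_unique _ _ H1) as U1. pose proof (is_lim_seq_unique _ _ H2) as U2.
  rewrite U1 in U2. injection U2. intros. lra.
Qed.


Ltac facts := cbn [Nat.mul Nat.add]; repeat rewrite fact_simpl; repeat rewrite mult_INR; simpl INR.
Lemma sin_lb_eq y : sin_lb y = y - y^3/6 + y^5/120 - y^7/5040.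
Proof. unfold sin_lb, sin_approx, sin_term. cbn [sum_f_R0]. facts. field. Qed.
Lemma sin_ub_eq y : sin_ub y = y - y^3/6 + y^5/120 - y^7/5040 + y^9/362880.
Proof. unfold sin_ub, sin_approx, sin_term. cbn [sum_f_R0]. facts. field. Qed.
Lemma cos_lb_eq y : cos_lb y = 1 - y^2/2 + y^4/24 - y^6/720.
Proof. unfold cos_lb, cos_approx, cos_term. cbn [sum_f_R0]. facts. field. Qed.
Lemma cos_ub_eq y : cos_ub y = 1 - y^2/2 + y^4/24 - y^6/720 + y^8/40320.
Proof. unfold cos_ub, cos_approx, cos_term. cbn [sum_f_R0]. facts. field. Qed.

Lemma PI_bounds : 3 < PI <= 4.
Proof. pose proof PI2_3_2. pose proof PI_4. lra. Qed.

Lemma sin_bounds y : 0 <= y <= 2 ->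
  y - y^3/6 + y^5/120 - y^7/5040 <= sin y <= y - y^3/6 + y^5/120 - y^7/5040 + y^9/362880.
Proof.
  intros Hy. pose proof PI_bounds. rewrite <- sin_ub_eq, <- sin_lb_eq. apply SIN; lra.
Qed.

Lemma cos_bounds y : 0 <= y <= PI/2 ->
  1 - y^2/2 + y^4/24 - y^6/720 <= cos y <= 1 - y^2/2 + y^4/24 - y^6/720 + y^8/40320.
Proof.
  intros Hy. pose proof PI_bounds. pose proof PI2_3_2. rewrite <- cos_ub_eq, <- cos_lb_eq. apply COS; lra.
Qed.

Lemma cot_bound : forall y, 0 < y <= PI / 2 -> Rabs (cos y / sin y - / y) <= 2 * y.
Proof.
  intros y Hy. pose proof PI_bounds.
  assert (Hy2 : y <= 2) by lra.
  set (z := y * y).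
  assert (Hz : 0 < z <= 4) by (unfold z; nra).
  destruct (sin_bounds y) as [Hs1 Hs2]; [lra|].
  assert (Hsl : sin y >= y / 3).
  { assert (y - y^3/6 + y^5/120 - y^7/5040 >= y/3); [|lra].
    assert (y - y^3/6 + y^5/120 - y^7/5040 - y/3 =
      (y * ((2/3 - z/6) + (z*z/120 - z*z*z/5040)))) by (unfold z; field).
    assert (2/3 - z/6 >= 0) by lra.
    assert (z*z/120 - z*z*z/5040 >= 0) by (assert (0 <= (4 - z) * (z*z)) by (apply Rmult_le_pos; nra); nra).
    assert (y * ((2/3 - z/6) + (z*z/120 - z*z*z/5040)) >= 0) by (apply Rle_ge, Rmult_le_pos; lra). lra. }
  destruct (cos_bounds y) as [Hc1 Hc2]; [lra|].
  assert (Hnum : Rabs (y * cos y - sin y) <= y^3 / 2).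
  { apply Rabs_le. split.
    - assert (y * (1 - y^2/2 + y^4/24 - y^6/720) - (y - y^3/6 + y^5/120 - y^7/5040 + y^9/362880) >= - (y^3/2)); [|nra].
      assert (y * (1 - y^2/2 + y^4/24 - y^6/720) - (y - y^3/6 + y^5/120 - y^7/5040 + y^9/362880) + y^3/2
        = (y*z * (1/6 + z/30 - z*z/840 - z*z*z/362880))) by (unfold z; field).
      assert (1/6 + z/30 - z*z/840 - z*z*z/362880 >= 0) by (assert (0 <= (4 - z) * (z*z)) by (apply Rmult_le_pos; nra); assert (0 <= (4-z)*z) by nra; nra).
      assert (y*z > 0) by (unfold z; apply Rmult_lt_0_compat; nra). nra.
    - assert (y * (1 - y^2/2 + y^4/24 - y^6/720 + y^8/40320) - (y - y^3/6 + y^5/120 - y^7/5040) <= y^3/2); [|nra].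
      assert (y * (1 - y^2/2 + y^4/24 - y^6/720 + y^8/40320) - (y - y^3/6 + y^5/120 - y^7/5040) - y^3/2
        = (y*z * (- 5/6 + z/30 - z*z/840 + z*z*z/40320))) by (unfold z; field).
      assert (- 5/6 + z/30 - z*z/840 + z*z*z/40320 <= 0) by (assert (0 <= (4 - z) * (z*z)) by (apply Rmult_le_pos; nra); assert (0 <= (4-z)*z) by nra; nra).
      assert (y*z > 0) by (unfold z; apply Rmult_lt_0_compat; nra). nra. }
  replace (cos y / sin y - / y) with ((y * cos y - sin y) / (y * sin y)) by (field; lra).
  unfold Rdiv. rewrite Rabs_mult, Rabs_inv, (Rabs_right (y * sin y)) by nra.
  apply Rle_trans with (y^3/2 * / (y * sin y)).
  + apply Rmult_le_compat_r; [|auto]. left; apply Rinv_0_lt_compat; nra.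
  + apply Rle_trans with (y^3/2 * / (y * (y/3))).
    * apply Rmult_le_compat_l. assert (y^3 > 0) by (apply pow_lt; lra). lra.
      apply Rinv_le_contravar; nra.
    * replace (y^3/2 * / (y * (y/3))) with (3/2*y) by (field; lra). lra.
Qed.


Lemma lim_abs_le : forall u (l : R) C, is_lim_seq u l -> (forall n, Rabs (u n) <= C) -> Rabs l <= C.
Proof.
  intros u l C Hl Hb.
  pose proof (is_lim_seq_abs _ _ Hl) as Ha. simpl in Ha.
  pose proof (is_lim_seq_le _ _ _ _ Hb Ha (is_lim_seq_const C)) as H. simpl in H. exact H.
Qed.

Lemma Sc_odd : forall N x, Sc N (- x) = - Sc N x.
Proof.
  induction N; intros x.
  - rewrite !Sc_O. apply Rinv_opp.
  - repeat rewrite Sc_S. rewrite IHN.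
    replace (- x + INR (S N)) with (- (x - INR (S N))) by ring.
    replace (- x - INR (S N)) with (- (x + INR (S N))) by ring.
    rewrite !Rinv_opp. ring.
Qed.

Lemma Fc_odd : forall x, Fc (- x) = - Fc x.
Proof.
  intros x.
  assert (H : is_lim_seq (fun N => Sc N (- x)) (- Fc x)).
  { apply is_lim_seq_ext with (fun N => - Sc N x). intros; rewrite Sc_odd; auto.
    pose proof (proj1 (is_lim_seq_opp _ _) (Sc_cv x)) as H. simpl in H. exact H. }
  unfold Fc at 1. rewrite (is_lim_seq_unique _ _ H). auto.
Qed.

Lemma Sc_near0 : forall N x, Rabs x <= 1/2 ->
  Rabs (Sc N x - / x) <= 4 * Rabs x - 4 * Rabs x / (2 * INR N + 1).
Proof.
  intros N x Hx. pose proof (Rabs_pos x).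
  assert (Hx1 : - (1/2) <= x <= 1/2) by (unfold Rabs in Hx; destruct (Rcase_abs x); lra).
  induction N.
  - rewrite Sc_O. simpl INR. replace (/ x - / x) with 0 by ring. rewrite Rabs_R0.
    replace (4 * Rabs x - 4 * Rabs x / (2 * 0 + 1)) with 0 by field. lra.
  - rewrite Sc_S. set (m := INR (S N)).
    assert (Hm : m = INR N + 1) by (unfold m; apply S_INR).
    pose proof (pos_INR N).
    assert (E : / (x + m) + / (x - m) = 2 * x / ((x + m) * (x - m))) by (field; lra).
    replace (Sc N x + / (x + m) + / (x - m) - / x) with ((Sc N x - / x) + (/ (x + m) + / (x - m))) by ring.
    eapply Rle_trans. apply Rabs_triang.
    assert (Ht : Rabs (/ (x + m) + / (x - m)) <= 8 * Rabs x / ((2 * m - 1) * (2 * m + 1))).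
    { rewrite E. unfold Rdiv. rewrite Rabs_mult, Rabs_mult, Rabs_inv, (Rabs_right 2) by lra.
      assert (Hpq : Rabs ((x + m) * (x - m)) = m * m - x * x).
      { rewrite Rabs_left. ring. nra. }
      rewrite Hpq.
      assert (Hd : (2 * m - 1) * (2 * m + 1) / 4 <= m * m - x * x) by nra.
      apply Rle_trans with (2 * Rabs x * / ((2 * m - 1) * (2 * m + 1) / 4)).
      - apply Rmult_le_compat_l. lra. apply Rinv_le_contravar. nra. auto.
      - right. field. nra. }
    rewrite Hm in Ht |- *.
    replace (2 * (INR N + 1) - 1) with (2 * INR N + 1) in Ht by ring.
    replace (2 * (INR N + 1) + 1) with (2 * INR N + 3) in Ht by ring.
    replace (4 * Rabs x - 4 * Rabs x / (2 * (INR N + 1) + 1)) with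
      ((4 * Rabs x - 4 * Rabs x / (2 * INR N + 1)) + 8 * Rabs x / ((2 * INR N + 1) * (2 * INR N + 3)))
      by (field; lra).
    apply Rplus_le_compat; auto.
Qed.

Lemma Fc_near0 : forall x, Rabs x <= 1/2 -> Rabs (Fc x - / x) <= 4 * Rabs x.
Proof.
  intros x Hx. apply lim_abs_le with (u := fun N => Sc N x - / x).
  - apply is_lim_seq_minus'. apply Sc_cv. apply is_lim_seq_const.
  - intros n. eapply Rle_trans. apply Sc_near0; auto.
    pose proof (pos_INR n). pose proof (Rabs_pos x).
    assert (0 <= 4 * Rabs x / (2 * INR n + 1)) by (apply Rmult_le_pos; [lra| left; apply Rinv_0_lt_compat; lra]).
    lra.
Qed.

Definition Gc (x : R) : R := PI * (cos (PI * x) / sin (PI * x)) - Fc x.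

Lemma Gc_shift : forall x, Gc (x + 1) = Gc x.
Proof.
  intros x. unfold Gc. rewrite Fc_shift.
  replace (PI * (x + 1)) with (PI * x + PI) by ring. rewrite neg_cos, neg_sin.
  unfold Rdiv. rewrite Rinv_opp. ring.
Qed.

Lemma Gc_0 : Gc 0 = 0.
Proof. unfold Gc. rewrite Fc_0, Rmult_0_r, sin_0. unfold Rdiv. rewrite Rinv_0. ring. Qed.

Lemma Gc_1 : Gc 1 = 0.
Proof. replace 1 with (0 + 1) by ring. rewrite Gc_shift. apply Gc_0. Qed.

Lemma Gc_odd : forall x, Gc (- x) = - Gc x.
Proof.
  intros x. unfold Gc. rewrite Fc_odd. replace (PI * - x) with (- (PI * x)) by ring.
  rewrite cos_neg, sin_neg. unfold Rdiv. rewrite Rinv_opp. ring.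
Qed.

Lemma Gc_near0_pos : forall x, 0 < x <= 1/2 -> Rabs (Gc x) <= 40 * x.
Proof.
  intros x Hx. pose proof PI_bounds.
  unfold Gc.
  replace (PI * (cos (PI * x) / sin (PI * x)) - Fc x) with
    (PI * (cos (PI * x) / sin (PI * x) - / (PI * x)) - (Fc x - / x)).
  2:{ assert (sin (PI*x) > 0) by (apply sin_gt_0; nra). rewrite Rinv_mult. field. repeat split; lra. }
  eapply Rle_trans. apply Rabs_triang. rewrite Rabs_Ropp, Rabs_mult, (Rabs_right PI) by lra.
  pose proof (cot_bound (PI * x) ltac:(split; nra)).
  pose proof (Fc_near0 x ltac:(rewrite Rabs_right; lra)).
  rewrite (Rabs_right x) in H1 by lra.
  assert (PI * Rabs (cos (PI * x) / sin (PI * x) - / (PI * x)) <= PI * (2 * (PI * x))) by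
    (apply Rmult_le_compat_l; lra).
  assert (PI*PI <= 16) by nra. assert (PI * (2 * (PI * x)) <= 32 * x) by nra. lra.
Qed.

Lemma Gc_near0 : forall x, Rabs x <= 1/2 -> Rabs (Gc x) <= 40 * Rabs x.
Proof.
  intros x Hx.
  destruct (Rtotal_order x 0) as [Hn|[Hz|Hp]].
  - replace x with (- (- x)) by ring. rewrite Gc_odd, Rabs_Ropp, Rabs_Ropp.
    rewrite (Rabs_left x) in Hx by lra. rewrite (Rabs_right (-x)) by lra.
    apply Gc_near0_pos. lra.
  - subst. rewrite Gc_0, Rabs_R0. lra.
  - rewrite (Rabs_right x) in * by lra. apply Gc_near0_pos. lra.
Qed.


Lemma inv_diff : forall a b c, 0 < c -> c <= a * b -> Rabs (/ a - / b) <= Rabs (a - b) / c.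
Proof.
  intros a b c Hc Hab.
  assert (Ha : a <> 0) by (intro; subst; nra).
  assert (Hb : b <> 0) by (intro; subst; nra).
  replace (/ a - / b) with ((b - a) / (a * b)) by (field; auto).
  unfold Rdiv. rewrite Rabs_mult, Rabs_inv, (Rabs_right (a*b)) by lra.
  rewrite <- Rabs_Ropp. replace (- (b - a)) with (a - b) by ring.
  apply Rmult_le_compat_l. apply Rabs_pos. apply Rinv_le_contravar; lra.
Qed.

Lemma Sc_lip : forall d x z N, 0 < d <= 1/2 -> d <= x <= 1 - d -> d <= z <= 1 - d ->
  Rabs (Sc (S N) x - Sc (S N) z) <= Rabs (x - z) * (2 / (d * d) + 5 - 4 / (INR N + 1)).
Proof.
  intros d x z N Hd Hx Hz. pose proof (Rabs_pos (x - z)) as Hxz.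
  assert (Hdd : 0 < d * d) by nra.
  induction N.
  - rewrite (Sc_S 0 x), (Sc_S 0 z), (Sc_O x), (Sc_O z). simpl INR.
    replace (/ x + / (x + 1) + / (x - 1) - (/ z + / (z + 1) + / (z - 1)))
      with ((/ x - / z) + (/ (x + 1) - / (z + 1)) + (/ (x - 1) - / (z - 1))) by ring.
    pose proof (inv_diff x z (d * d) Hdd ltac:(nra)) as H1.
    pose proof (inv_diff (x + 1) (z + 1) 1 ltac:(lra) ltac:(nra)) as H2.
    pose proof (inv_diff (x - 1) (z - 1) (d * d) Hdd ltac:(nra)) as H3.
    replace (x + 1 - (z + 1)) with (x - z) in H2 by ring.
    replace (x - 1 - (z - 1)) with (x - z) in H3 by ring.
    eapply Rle_trans. apply Rabs_triang. eapply Rle_trans. apply Rplus_le_compat_r. apply Rabs_triang.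
    replace (Rabs (x - z) * (2 / (d * d) + 5 - 4 / (0 + 1))) with
      (Rabs (x - z) / (d * d) + Rabs (x - z) / 1 + Rabs (x - z) / (d * d)) by (field; lra).
    lra.
  - rewrite (Sc_S (S N) x), (Sc_S (S N) z). set (m := INR (S (S N))).
    assert (Hm : m = INR N + 2) by (unfold m; rewrite !S_INR; ring).
    pose proof (pos_INR N).
    replace (Sc (S N) x + / (x + m) + / (x - m) - (Sc (S N) z + / (z + m) + / (z - m))) with
      ((Sc (S N) x - Sc (S N) z) + (/ (x + m) - / (z + m)) + (/ (x - m) - / (z - m))) by ring.
    pose proof (inv_diff (x + m) (z + m) (m * m) ltac:(nra) ltac:(nra)) as H2.
    pose proof (inv_diff (x - m) (z - m) ((m - 1) * (m - 1)) ltac:(nra) ltac:(nra)) as H3.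
    replace (x + m - (z + m)) with (x - z) in H2 by ring.
    replace (x - m - (z - m)) with (x - z) in H3 by ring.
    eapply Rle_trans. apply Rabs_triang. eapply Rle_trans. apply Rplus_le_compat_r. apply Rabs_triang.
    rewrite S_INR.
    assert (Hk : / (m * m) + / ((m - 1) * (m - 1)) <= 4 / (INR N + 1) - 4 / (INR N + 1 + 1)).
    { rewrite Hm. replace (4 / (INR N + 1) - 4 / (INR N + 1 + 1)) with (4 / ((INR N + 1) * (INR N + 2))) by (field; lra).
      replace (INR N + 2 - 1) with (INR N + 1) by ring.
      assert (/ ((INR N + 2) * (INR N + 2)) <= / ((INR N + 1) * (INR N + 2))) by (apply Rinv_le_contravar; nra).
      assert (/ ((INR N + 1) * (INR N + 1)) <= 3 / ((INR N + 1) * (INR N + 2))).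
      { unfold Rdiv. replace (3 * / ((INR N + 1) * (INR N + 2))) with (/ ((INR N + 1) * (INR N + 2) / 3)) by (field; lra).
        apply Rinv_le_contravar; nra. }
      unfold Rdiv in *. lra. }
    assert (E1 : Rabs (x - z) / (m * m) = Rabs (x - z) * / (m * m)) by auto.
    assert (E2 : Rabs (x - z) / ((m - 1) * (m - 1)) = Rabs (x - z) * / ((m - 1) * (m - 1))) by auto.
    rewrite E1 in H2. rewrite E2 in H3.
    assert (Rabs (x - z) * (/ (m * m) + / ((m - 1) * (m - 1))) <= Rabs (x - z) * (4 / (INR N + 1) - 4 / (INR N + 1 + 1)))
      by (apply Rmult_le_compat_l; auto).
    nra.
Qed.

Lemma Fc_lip : forall d x z, 0 < d <= 1/2 -> d <= x <= 1 - d -> d <= z <= 1 - d ->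
  Rabs (Fc x - Fc z) <= Rabs (x - z) * (2 / (d * d) + 5).
Proof.
  intros d x z Hd Hx Hz.
  apply lim_abs_le with (u := fun N => Sc (S N) x - Sc (S N) z).
  - apply is_lim_seq_minus'; apply (is_lim_seq_incr_1 (fun N => Sc N _)); apply Sc_cv.
  - intros n. eapply Rle_trans. apply (Sc_lip d); auto.
    apply Rmult_le_compat_l. apply Rabs_pos. pose proof (pos_INR n).
    assert (0 <= 4 / (INR n + 1)) by (apply Rmult_le_pos; [lra | left; apply Rinv_0_lt_compat; lra]).
    lra.
Qed.

Lemma lip_cont : forall F x0 d K, 0 < d ->
  (forall x, Rabs (x - x0) < d -> Rabs (F x - F x0) <= K * Rabs (x - x0)) -> continuity_pt F x0.
Proof.
  intros F x0 d K Hd HK. unfold continuity_pt, continue_in, limit1_in, limit_in.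
  intros eps Heps. simpl. unfold R_dist.
  set (K' := Rabs K + 1).
  assert (HK' : 0 < K') by (unfold K'; pose proof (Rabs_pos K); lra).
  exists (Rmin d (eps / K')). split.
  - apply Rmin_pos; auto. unfold Rdiv; apply Rmult_lt_0_compat; auto. apply Rinv_0_lt_compat; auto.
  - intros x [_ Hx].
    assert (Hx1 : Rabs (x - x0) < d) by (eapply Rlt_le_trans; [apply Hx| apply Rmin_l]).
    assert (Hx2 : Rabs (x - x0) < eps / K') by (eapply Rlt_le_trans; [apply Hx| apply Rmin_r]).
    eapply Rle_lt_trans. apply HK; auto.
    apply Rle_lt_trans with (K' * Rabs (x - x0)).
    + apply Rmult_le_compat_r. apply Rabs_pos. unfold K'. pose proof (RRle_abs K). lra.
    + replace eps with (K' * (eps / K')) by (field; lra). apply Rmult_lt_compat_l; auto.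
Qed.

Lemma cot_cont : forall x0, sin (PI * x0) <> 0 ->
  continuity_pt (fun x => PI * (cos (PI * x) / sin (PI * x))) x0.
Proof.
  intros x0 H. apply continuity_pt_filterlim.
  apply (ex_derive_continuous (fun x => PI * (cos (PI * x) / sin (PI * x)))).
  auto_derive. auto.
Qed.

Lemma Gc_cont : forall c, 0 <= c <= 1 -> continuity_pt Gc c.
Proof.
  intros c Hc.
  destruct (Req_dec c 0) as [H0|H0].
  { subst. apply lip_cont with (d := 1/2) (K := 40). lra.
    intros x Hx. rewrite Gc_0. replace (x - 0) with x in * by ring. rewrite Rminus_0_r. apply Gc_near0. lra. }
  destruct (Req_dec c 1) as [H1|H1].
  { subst. apply lip_cont with (d := 1/2) (K := 40). lra.
    intros x Hx. rewrite Gc_1. rewrite Rminus_0_r.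
    replace x with ((x - 1) + 1) at 1 by ring. rewrite Gc_shift. apply Gc_near0. lra. }
  assert (Hc' : 0 < c < 1) by lra.
  assert (Hs : sin (PI * c) <> 0).
  { apply Rgt_not_eq. apply sin_gt_0. pose proof PI_bounds. nra. pose proof PI_bounds. nra. }
  assert (Eq : Gc = minus_fct (fun x => PI * (cos (PI * x) / sin (PI * x))) Fc) by reflexivity.
  rewrite Eq. apply continuity_pt_minus. apply cot_cont; auto.
  set (d := Rmin c (1 - c) / 2).
  assert (Hd : 0 < d <= 1/2).
  { unfold d. split. apply Rmult_lt_0_compat. apply Rmin_pos; lra. lra.
    pose proof (Rmin_l c (1 - c)). lra. }
  assert (Hd1 : d <= c / 2) by (unfold d; pose proof (Rmin_l c (1 - c)); lra).
  assert (Hd2 : d <= (1 - c) / 2) by (unfold d; pose proof (Rmin_r c (1 - c)); lra).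
  apply lip_cont with (d := d) (K := 2 / (d * d) + 5). lra.
  intros x Hx. rewrite Rmult_comm. apply Fc_lip; auto.
  - unfold Rabs in Hx; destruct (Rcase_abs (x - c)); lra.
  - lra.
Qed.

Lemma Gc_dup : forall x, 0 < x < 1 -> Gc (x / 2) + Gc ((x + 1) / 2) = 2 * Gc x.
Proof.
  intros x Hx. pose proof PI_bounds. unfold Gc.
  set (a := PI * x / 2).
  assert (Ha : 0 < a < PI / 2) by (unfold a; split; nra).
  replace (PI * (x / 2)) with a by (unfold a; field).
  replace (PI * ((x + 1) / 2)) with (a + PI / 2) by (unfold a; field).
  replace (PI * x) with (2 * a) by (unfold a; field).
  rewrite cos_plus, sin_plus, cos_PI2, sin_PI2, sin_2a, cos_2a.
  assert (Hs : sin a > 0) by (apply sin_gt_0; lra).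
  assert (Hc : cos a > 0) by (apply cos_gt_0; lra).
  pose proof (Fc_dup x) as HF.
  assert (E : PI * (cos a / sin a) + PI * ((cos a * 0 - sin a * 1) / (sin a * 0 + cos a * 1))
     = 2 * (PI * ((cos a * cos a - sin a * sin a) / (2 * sin a * cos a)))) by (field; lra).
  lra.
Qed.

Lemma pow2_ge : forall n, INR n <= 2 ^ n.
Proof.
  induction n. simpl; lra. rewrite S_INR. simpl. pose proof (pow_le 2 n ltac:(lra)).
  assert (1 <= 2 ^ n) by (apply pow_R1_Rle; lra). lra.
Qed.

Lemma herglotz_le : forall H : R -> R,
  (forall c, 0 <= c <= 1 -> continuity_pt H c) -> H 0 = 0 -> H 1 = 0 ->
  (forall y, 0 < y < 1 -> H (y / 2) + H ((y + 1) / 2) = 2 * H y) ->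
  (forall t, 0 < t <= 1/2 -> H t <= 40 * t) ->
  forall y, 0 <= y <= 1 -> H y <= 0.
Proof.
  intros H Hc H0 H1 Hd Hb y Hy.
  destruct (continuity_ab_maj H 0 1 ltac:(lra) Hc) as [Mx [HM HMx]].
  enough (H Mx <= 0) by (pose proof (HM y Hy); lra).
  destruct (Rle_lt_dec (H Mx) 0) as [|Hpos]; auto. exfalso.
  assert (HMx' : 0 < Mx < 1).
  { split; destruct (Req_dec Mx 0); destruct (Req_dec Mx 1); subst; try lra. }
  assert (Hk : forall k, 0 < Mx / 2 ^ k < 1 /\ H (Mx / 2 ^ k) = H Mx).
  { induction k.
    - simpl. replace (Mx / 1) with Mx by field. split; auto.
    - destruct IHk as [Hk1 Hk2].
      replace (Mx / 2 ^ S k) with ((Mx / 2 ^ k) / 2) by (simpl; field; pose proof (pow_lt 2 k); lra).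
      split. lra.
      pose proof (Hd _ Hk1) as Hdk. rewrite Hk2 in Hdk.
      pose proof (HM (Mx / 2 ^ k / 2) ltac:(lra)).
      pose proof (HM ((Mx / 2 ^ k + 1) / 2) ltac:(lra)). lra. }
  set (M := H Mx) in *.
  destruct (nat_big (40 / M)) as [n Hn].
  destruct (Hk (S n)) as [Hk1 Hk2].
  assert (Hp : 0 < 2 ^ n) by (apply pow_lt; lra).
  assert (Hle : Mx / 2 ^ S n <= 1/2).
  { assert (H2 : 2 <= 2 ^ S n) by (simpl; assert (1 <= 2 ^ n) by (apply pow_R1_Rle; lra); lra).
    unfold Rdiv. apply Rmult_le_compat; try lra. left; apply Rinv_0_lt_compat; lra.
    apply Rinv_le_contravar; lra. }
  pose proof (Hb _ (conj (proj1 Hk1) Hle)) as Hbb. rewrite Hk2 in Hbb. fold M in Hbb.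
  pose proof (pow2_ge n).
  assert (Mx / 2 ^ S n <= / 2 ^ n).
  { assert (0 < / 2 ^ n) by (apply Rinv_0_lt_compat; lra).
    unfold Rdiv. simpl pow. rewrite Rinv_mult. nra. }
  assert (HA : M <= 40 / 2 ^ n) by (unfold Rdiv; nra).
  assert (HB : 40 / M < 2 ^ n) by lra.
  assert (HC : 40 < M * 2 ^ n).
  { apply (Rmult_lt_compat_l M) in HB; auto. replace (M * (40 / M)) with 40 in HB by (field; lra). lra. }
  assert (HD : M * 2 ^ n <= 40).
  { apply (Rmult_le_compat_r (2 ^ n)) in HA; [|lra]. replace (40 / 2 ^ n * 2 ^ n) with 40 in HA by (field; lra). lra. }
  lra.
Qed.

Lemma Gc_zero : forall y, 0 <= y <= 1 -> Gc y = 0.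
Proof.
  intros y Hy. apply Rle_antisym.
  - apply herglotz_le; auto. apply Gc_cont. apply Gc_0. apply Gc_1. apply Gc_dup.
    intros t Ht. pose proof (Gc_near0 t ltac:(rewrite Rabs_right; lra)). rewrite (Rabs_right t) in H by lra.
    unfold Rabs in H. destruct (Rcase_abs (Gc t)); lra.
  - assert (- Gc y <= 0); [|lra].
    apply (herglotz_le (fun x => - Gc x)); auto.
    + intros c Hc. apply continuity_pt_opp. apply Gc_cont; auto.
    + rewrite Gc_0; ring.
    + rewrite Gc_1; ring.
    + intros y0 Hy0. pose proof (Gc_dup y0 Hy0). lra.
    + intros t Ht. pose proof (Gc_near0 t ltac:(rewrite Rabs_right; lra)). rewrite (Rabs_right t) in H by lra.
      unfold Rabs in H. destruct (Rcase_abs (Gc t)); lra.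
Qed.

Theorem cot_pf : forall x, 0 < x < 1 -> Fc x = PI * (cos (PI * x) / sin (PI * x)).
Proof. intros x Hx. pose proof (Gc_zero x ltac:(lra)). unfold Gc in H. lra. Qed.


Definition tn_term (x : R) (k : nat) : R := / (INR k + / 2 - x) - / (INR k + / 2 + x).
Definition un_term (x : R) (k : nat) : R := (-1) ^ k * (/ (INR k + / 2 + x) + / (INR k + / 2 - x)).

Fixpoint Tn (K : nat) (x : R) : R := match K with O => 0 | S k => Tn k x + tn_term x k end.
Fixpoint Un (K : nat) (x : R) : R := match K with O => 0 | S k => Un k x + un_term x k end.

Lemma Tn_S : forall k x, Tn (S k) x = Tn k x + tn_term x k. Proof. reflexivity. Qed.
Lemma Un_S : forall k x, Un (S k) x = Un k x + un_term x k. Proof. reflexivity. Qed.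

Lemma Tn_id : forall N x, - Sc N (x + / 2) = Tn N x - / (x + INR N + / 2).
Proof.
  induction N; intros x.
  - rewrite Sc_O. simpl Tn. simpl INR. replace (x + 0 + / 2) with (x + / 2) by ring. ring.
  - rewrite Sc_S, Tn_S. unfold tn_term.
    replace (- (Sc N (x + / 2) + / (x + / 2 + INR (S N)) + / (x + / 2 - INR (S N))))
      with (- Sc N (x + / 2) - / (x + / 2 + INR (S N)) - / (x + / 2 - INR (S N))) by ring.
    rewrite IHN. rewrite S_INR.
    replace (x + / 2 - (INR N + 1)) with (- (INR N + / 2 - x)) by field.
    rewrite Rinv_opp.
    replace (x + / 2 + (INR N + 1)) with (x + (INR N + 1) + / 2) by ring.
    replace (x + INR N + / 2) with (INR N + / 2 + x) by ring.
    ring.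
Qed.

Lemma Un_id : forall N x, - / 2 < x < / 2 ->
  (Sc N ((x + / 2) / 2) - Sc N ((x + 3 / 2) / 2)) / 2
  = Un (2 * N) x + / (x + 2 * INR N + / 2) - / (x + 2 * INR N + 3 / 2).
Proof.
  induction N; intros x Hx.
  - rewrite !Sc_O. simpl Un. simpl INR. rewrite !inv_half.
    replace (x + 2 * 0 + / 2) with (x + / 2) by ring.
    replace (x + 2 * 0 + 3 / 2) with (x + 3 / 2) by ring. field. lra.
  - replace (2 * S N)%nat with (S (S (2 * N))) by lia.
    rewrite (Sc_S N ((x + / 2) / 2)), (Sc_S N ((x + 3 / 2) / 2)).
    rewrite !Un_S.
    replace ((Sc N ((x + / 2) / 2) + / ((x + / 2) / 2 + INR (S N)) + / ((x + / 2) / 2 - INR (S N)) -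
      (Sc N ((x + 3 / 2) / 2) + / ((x + 3 / 2) / 2 + INR (S N)) + / ((x + 3 / 2) / 2 - INR (S N)))) / 2)
    with ((Sc N ((x + / 2) / 2) - Sc N ((x + 3 / 2) / 2)) / 2 +
      (/ ((x + / 2) / 2 + INR (S N)) + / ((x + / 2) / 2 - INR (S N))
       - / ((x + 3 / 2) / 2 + INR (S N)) - / ((x + 3 / 2) / 2 - INR (S N))) / 2) by lra.
    rewrite IHN by auto. unfold un_term.
    rewrite pow_1_even, pow_1_odd.
    repeat rewrite S_INR. rewrite mult_INR.
    replace (INR 2) with 2 by (simpl; ring).
    pose proof (pos_INR N).
    field. repeat split; lra.
Qed.

Lemma Tn_id' : forall N x, - / 2 < x < / 2 -> Tn N x = - Sc N (x + / 2) + / (x + INR N + / 2).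
Proof. intros. rewrite Tn_id. ring. Qed.

Lemma even_odd_lim : forall (u : nat -> R) (l : R),
  is_lim_seq (fun n => u (2 * n)%nat) l -> is_lim_seq (fun n => u (S (2 * n))) l -> is_lim_seq u l.
Proof.
  intros u l He Ho. apply is_lim_seq_Reals. apply is_lim_seq_Reals in He. apply is_lim_seq_Reals in Ho.
  intros eps Heps. destruct (He eps Heps) as [N1 H1]. destruct (Ho eps Heps) as [N2 H2].
  exists (2 * (N1 + N2))%nat. intros n Hn.
  destruct (Nat.Even_or_Odd n) as [[m Hm]|[m Hm]]; subst n.
  - apply H1. lia.
  - replace (2 * m + 1)%nat with (S (2 * m)) by lia. apply H2. lia.
Qed.

Lemma lim_inv_lin2 : forall a, is_lim_seq (fun n => / (2 * INR n + a)) 0.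
Proof.
  intros a. apply is_lim_seq_ext with (fun n => / 2 * / (INR n + a / 2)).
  { intros n. rewrite <- Rinv_mult. f_equal. field. }
  replace (Finite 0) with (Finite (/ 2 * 0)) by (f_equal; ring).
  apply (is_lim_seq_scal_l _ (/ 2) 0). apply lim_inv_lin.
Qed.

Lemma tan_lim : forall x, - / 2 < x < / 2 ->
  is_lim_seq (fun N => Tn N x) (PI * (sin (PI * x) / cos (PI * x))).
Proof.
  intros x Hx.
  apply is_lim_seq_ext with (fun N => - Sc N (x + / 2) + / (INR N + (x + / 2))).
  { intros N. rewrite Tn_id' by auto. f_equal. f_equal. ring. }
  replace (PI * (sin (PI * x) / cos (PI * x))) with (- Fc (x + / 2) + 0).
  - apply is_lim_seq_plus'. 
    + pose proof (proj1 (is_lim_seq_opp _ _) (Sc_cv (x + / 2))) as H. simpl in H. exact H.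
    + apply lim_inv_lin.
  - rewrite cot_pf by lra.
    replace (PI * (x + / 2)) with (PI * x + PI / 2) by field.
    rewrite cos_plus, sin_plus, cos_PI2, sin_PI2.
    unfold Rdiv. replace (sin (PI * x) * 0 + cos (PI * x) * 1) with (cos (PI * x)) by ring.
    ring.
Qed.

Lemma sec_lim : forall x, - / 2 < x < / 2 -> is_lim_seq (fun K => Un K x) (PI / cos (PI * x)).
Proof.
  intros x Hx. pose proof PI_bounds.
  set (a := (x + / 2) / 2).
  assert (Ha : 0 < a < / 2) by (unfold a; lra).
  assert (Hs : sin (PI * a) > 0) by (apply sin_gt_0; nra).
  assert (Hc : cos (PI * a) > 0) by (apply cos_gt_0; nra).
  assert (Hlim : PI / cos (PI * x) = / 2 * (Fc a - Fc ((x + 3 / 2) / 2)) - 0 + 0).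
  { rewrite (cot_pf a) by lra. rewrite (cot_pf ((x + 3 / 2) / 2)) by (unfold a in Ha; lra).
    replace (PI * ((x + 3 / 2) / 2)) with (PI * a + PI / 2) by (unfold a; field).
    replace (PI * x) with (2 * (PI * a) - PI / 2) by (unfold a; field).
    rewrite cos_minus, cos_PI2, sin_PI2, cos_plus, sin_plus, cos_PI2, sin_PI2, sin_2a.
    pose proof (sin2_cos2 (PI * a)) as Hsc. unfold Rsqr in Hsc.
    set (s := sin (PI * a)) in *. set (c := cos (PI * a)) in *.
    replace (PI / (cos (2 * (PI * a)) * 0 + 2 * s * c * 1)) with (PI * (s * s + c * c) / (2 * s * c))
      by (rewrite Hsc; field; lra).
    field. lra. }
  assert (Heven : is_lim_seq (fun N => Un (2 * N) x) (PI / cos (PI * x))).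
  { rewrite Hlim.
    apply is_lim_seq_ext with (fun N => / 2 * (Sc N a - Sc N ((x + 3 / 2) / 2))
       - / (2 * INR N + (x + / 2)) + / (2 * INR N + (x + 3 / 2))).
    { intros N. pose proof (Un_id N x Hx) as E. unfold a.
      replace (x + 2 * INR N + / 2) with (2 * INR N + (x + / 2)) in E by ring.
      replace (x + 2 * INR N + 3 / 2) with (2 * INR N + (x + 3 / 2)) in E by ring. lra. }
    apply is_lim_seq_plus'. apply is_lim_seq_minus'.
    - apply (is_lim_seq_scal_l _ (/ 2) (Fc a - Fc ((x + 3 / 2) / 2))). apply is_lim_seq_minus'; apply Sc_cv.
    - apply lim_inv_lin2.
    - apply lim_inv_lin2. }
  apply even_odd_lim; auto.
  apply is_lim_seq_ext with (fun N => Un (2 * N) x + (/ (2 * INR N + (/ 2 + x)) + / (2 * INR N + (/ 2 - x)))).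
  { intros N. rewrite Un_S. unfold un_term. rewrite pow_1_even, mult_INR.
    replace (INR 2) with 2 by (simpl; ring).
    replace (2 * INR N + / 2 + x) with (2 * INR N + (/ 2 + x)) by ring.
    replace (2 * INR N + / 2 - x) with (2 * INR N + (/ 2 - x)) by ring. ring. }
  replace (PI / cos (PI * x)) with (PI / cos (PI * x) + (0 + 0)) by ring.
  apply is_lim_seq_plus'; auto. apply is_lim_seq_plus'; apply lim_inv_lin2.
Qed.


Definition mu (k : nat) : R := (2 * INR k + 1) * PI / 2.

Lemma mu_ge : forall k, PI / 2 <= mu k.
Proof. intros k. unfold mu. pose proof (pos_INR k). pose proof PI_bounds. nra. Qed.

Lemma sum_n_scal_ext : forall (a : nat -> R) (c : R) (T : nat -> R),
  (forall k, a k = c * (T (S k) - T k)) -> T O = 0 -> forall K, sum_n a K = c * T (S K).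
Proof.
  intros a c T Ha H0 K. induction K.
  - rewrite sum_O, Ha, H0. simpl. ring.
  - rewrite sum_Sn, IHK, Ha. change plus with Rplus. simpl. ring.
Qed.

Lemma tan_pf : forall y, Rabs y < PI / 2 ->
  is_series (fun k => 2 * y / (mu k ^ 2 - y ^ 2)) (tan y).
Proof.
  intros y Hy. pose proof PI_bounds.
  assert (Hy' : - (PI / 2) < y < PI / 2) by (unfold Rabs in Hy; destruct (Rcase_abs y); lra).
  set (x := y / PI).
  assert (Hx : - / 2 < x < / 2).
  { unfold x. split.
    - apply Rmult_lt_reg_r with PI. lra. unfold Rdiv. rewrite Rmult_assoc, Rinv_l by lra. lra.
    - apply Rmult_lt_reg_r with PI. lra. unfold Rdiv. rewrite Rmult_assoc, Rinv_l by lra. lra. }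
  assert (Hxy : y = PI * x) by (unfold x; field; lra).
  unfold is_series. change (is_lim_seq (sum_n (fun k => 2 * y / (mu k ^ 2 - y ^ 2))) (tan y)).
  apply is_lim_seq_ext with (fun K => / PI * Tn (S K) x).
  { intros K. symmetry. apply sum_n_scal_ext with (T := fun K => Tn K x); auto.
    intros k. rewrite Tn_S. unfold tn_term, mu. rewrite Hxy. pose proof (pos_INR k).
    field. repeat split; try lra; nra. }
  replace (tan y) with (/ PI * (PI * (sin (PI * x) / cos (PI * x)))).
  - apply (is_lim_seq_scal_l _ (/ PI) (PI * (sin (PI * x) / cos (PI * x)))).
    apply (is_lim_seq_incr_1 (fun K => Tn K x)). apply tan_lim; auto.
  - rewrite <- Hxy. unfold tan. assert (cos y > 0) by (apply cos_gt_0; lra). field. lra.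
Qed.

Lemma sec_pf : forall y, Rabs y < PI / 2 ->
  is_series (fun k => (-1) ^ k * 2 * mu k / (mu k ^ 2 - y ^ 2)) (sec y).
Proof.
  intros y Hy. pose proof PI_bounds.
  assert (Hy' : - (PI / 2) < y < PI / 2) by (unfold Rabs in Hy; destruct (Rcase_abs y); lra).
  set (x := y / PI).
  assert (Hx : - / 2 < x < / 2).
  { unfold x. split.
    - apply Rmult_lt_reg_r with PI. lra. unfold Rdiv. rewrite Rmult_assoc, Rinv_l by lra. lra.
    - apply Rmult_lt_reg_r with PI. lra. unfold Rdiv. rewrite Rmult_assoc, Rinv_l by lra. lra. }
  assert (Hxy : y = PI * x) by (unfold x; field; lra).
  unfold is_series. change (is_lim_seq (sum_n (fun k => (-1) ^ k * 2 * mu k / (mu k ^ 2 - y ^ 2))) (sec y)).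
  apply is_lim_seq_ext with (fun K => / PI * Un (S K) x).
  { intros K. symmetry. apply sum_n_scal_ext with (T := fun K => Un K x); auto.
    intros k. rewrite Un_S. unfold un_term, mu. rewrite Hxy. pose proof (pos_INR k).
    field. repeat split; try lra; nra. }
  replace (sec y) with (/ PI * (PI / cos (PI * x))).
  - apply (is_lim_seq_scal_l _ (/ PI) (PI / cos (PI * x))).
    apply (is_lim_seq_incr_1 (fun K => Un K x)). apply sec_lim; auto.
  - rewrite <- Hxy. unfold sec. assert (cos y > 0) by (apply cos_gt_0; lra). field. lra.
Qed.


Lemma is_lin : forall a b la lb al be, is_series a la -> is_series b lb ->
  is_series (fun k => al * a k + be * b k) (al * la + be * lb).
Proof.
  intros a b la lb al be Ha Hb.
  pose proof (is_series_plus _ _ _ _ (is_series_scal_l al a la Ha) (is_series_scal_l be b lb Hb)) as H.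
  exact H.
Qed.

Lemma ex_lin : forall a b al be, ex_series a -> ex_series b -> ex_series (fun k => al * a k + be * b k).
Proof. intros a b al be [la Ha] [lb Hb]. exists (al * la + be * lb). apply is_lin; auto. Qed.

Lemma mu_pos : forall k, 3/2 < mu k.
Proof. intros. pose proof (mu_ge k). pose proof PI_bounds. lra. Qed.

Lemma mu_sq_tel : forall k, / (mu k ^ 2) <= tel k.
Proof.
  intros k. unfold tel, mu. pose proof (pos_INR k). pose proof PI_bounds.
  apply Rinv_le_contravar. nra.
  assert ((2 * INR k + 1) * PI / 2 >= (2 * INR k + 1) * (3/2)) by nra.
  assert (((2 * INR k + 1) * PI / 2) ^ 2 >= ((2 * INR k + 1) * (3/2)) ^ 2).
  { simpl. rewrite !Rmult_1_r. apply Rle_ge. apply Rmult_le_compat; nra. }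
  nra.
Qed.

Lemma mu_lt : forall j k, (j < k)%nat -> mu j < mu k.
Proof.
  intros j k H. unfold mu. apply lt_INR in H. pose proof PI_bounds. nra.
Qed.

Lemma mu_0 : mu 0 = PI / 2.
Proof. unfold mu. simpl. field. Qed.
Lemma mu_1 : mu 1 = 3 * mu 0.
Proof. unfold mu. simpl. field. Qed.
Lemma mu_2 : mu 2 = 5 * mu 0.
Proof. unfold mu. simpl. field. Qed.

Definition qt (M : nat) (t : R) (k : nat) : R := (-1) ^ k * 2 * mu k / (mu k ^ (2 * M) * (mu k ^ 2 - t ^ 2)).
Definition at_ (M : nat) (k : nat) : R := (-1) ^ k * 2 / mu k ^ (2 * M + 1).
Definition tt (t : R) (k : nat) : R := 2 / (mu k ^ 2 - t ^ 2).
Definition t0 (k : nat) : R := 2 / mu k ^ 2.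

Lemma sq_gap : forall k t, Rabs t < PI / 2 -> 0 < mu k ^ 2 - t ^ 2.
Proof.
  intros k t Ht. pose proof (mu_ge k). pose proof PI_bounds.
  assert (t * t < mu k * mu k).
  { assert (Rabs t * Rabs t < mu k * mu k) by (pose proof (Rabs_pos t); nra).
    rewrite <- Rabs_mult in H1. unfold Rabs in H1. destruct (Rcase_abs (t * t)); nra. }
  simpl. lra.
Qed.

Lemma qt_rec : forall M t k, Rabs t < PI / 2 -> qt M t k = at_ M k + t ^ 2 * qt (S M) t k.
Proof.
  intros M t k Ht. pose proof (sq_gap k t Ht). pose proof (mu_pos k).
  unfold qt, at_. replace (2 * S M)%nat with (2 * M + 2)%nat by lia.
  rewrite !pow_add. assert (0 < mu k ^ (2 * M)) by (apply pow_lt; lra).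
  field; repeat split; try lra; try (apply pow_nonzero; lra).
Qed.

Lemma qt0 : forall t k, qt 0 t k = (-1) ^ k * 2 * mu k / (mu k ^ 2 - t ^ 2).
Proof. intros. unfold qt. simpl pow at 2. rewrite Rmult_1_l. auto. Qed.

Lemma sq_le1 : forall t, Rabs t <= 1 -> t ^ 2 <= 1.
Proof.
  intros t Ht. simpl. rewrite Rmult_1_r. rewrite <- (Rabs_right (t * t)) by (apply Rle_ge, Rle_0_sqr).
  rewrite Rabs_mult. pose proof (Rabs_pos t). nra.
Qed.

Lemma qt_bound : forall M t k, (1 <= M)%nat -> Rabs t <= 1 -> Rabs (qt M t k) <= 4 * tel k.
Proof.
  intros M t k HM Ht. pose proof (mu_pos k) as Hm. pose proof (mu_sq_tel k) as Htel.
  pose proof (sq_le1 t Ht) as Ht2.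
  assert (Hp : mu k ^ 2 <= mu k ^ (2 * M)) by (apply Rle_pow; [lra | lia]).
  assert (Hm2 : 2 <= mu k ^ 2) by (simpl; nra).
  unfold qt. unfold Rdiv. rewrite Rabs_mult, Rabs_mult, Rabs_mult, Rabs_inv.
  rewrite pow_1_abs, Rmult_1_l, (Rabs_right 2) by lra. rewrite (Rabs_right (mu k)) by lra.
  rewrite Rabs_right. 2:{ apply Rle_ge, Rmult_le_pos; [|lra]. apply pow_le; lra. }
  apply Rle_trans with (2 * mu k * / (mu k ^ 2 * (mu k ^ 2 / 2))).
  - apply Rmult_le_compat_l. nra. apply Rinv_le_contravar. apply Rmult_lt_0_compat; lra.
    apply Rmult_le_compat; lra.
  - replace (2 * mu k * / (mu k ^ 2 * (mu k ^ 2 / 2))) with (4 / mu k * / mu k ^ 2) by (field; lra).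
    assert (4 / mu k <= 4) by (unfold Rdiv; apply Rle_trans with (4 * 1); [apply Rmult_le_compat_l; [lra|]; rewrite <- Rinv_1; apply Rinv_le_contravar; lra | lra]).
    assert (0 < / mu k ^ 2) by (apply Rinv_0_lt_compat; lra).
    nra.
Qed.

Lemma at_bound : forall M k, (1 <= M)%nat -> Rabs (at_ M k) <= 2 * tel k.
Proof.
  intros M k HM. pose proof (mu_pos k) as Hm. pose proof (mu_sq_tel k) as Htel.
  assert (Hp : mu k ^ 2 <= mu k ^ (2 * M + 1)) by (apply Rle_pow; [lra | lia]).
  unfold at_. unfold Rdiv. rewrite Rabs_mult, Rabs_mult, Rabs_inv.
  rewrite pow_1_abs, Rmult_1_l, (Rabs_right 2) by lra.
  rewrite Rabs_right. 2:{ apply Rle_ge, pow_le; lra. }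
  apply Rmult_le_compat_l. lra. eapply Rle_trans; [|apply Htel].
  apply Rinv_le_contravar. simpl; nra. auto.
Qed.

Lemma tt_bound : forall t k, Rabs t <= 1 -> Rabs (tt t k) <= 4 * tel k.
Proof.
  intros t k Ht. pose proof (mu_pos k) as Hm. pose proof (mu_sq_tel k) as Htel.
  pose proof (sq_le1 t Ht) as Ht2.
  assert (Hm2 : 2 <= mu k ^ 2) by (simpl; nra).
  unfold tt. unfold Rdiv. rewrite Rabs_mult, Rabs_inv, (Rabs_right 2) by lra.
  rewrite Rabs_right by lra.
  apply Rle_trans with (2 * / (mu k ^ 2 / 2)).
  - apply Rmult_le_compat_l. lra. apply Rinv_le_contravar; lra.
  - replace (2 * / (mu k ^ 2 / 2)) with (4 * / mu k ^ 2) by (field; lra). lra.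
Qed.

Lemma t0_bound : forall k, Rabs (t0 k) <= 2 * tel k.
Proof.
  intros k. pose proof (mu_pos k) as Hm. pose proof (mu_sq_tel k) as Htel.
  unfold t0, Rdiv. rewrite Rabs_mult, Rabs_inv, (Rabs_right 2) by lra.
  rewrite Rabs_right by (apply Rle_ge, pow_le; lra). lra.
Qed.

Lemma ex_at_pos : forall M, (1 <= M)%nat -> ex_series (at_ M).
Proof. intros. apply ex_series_dom with 2. intros; apply at_bound; auto. Qed.

Lemma ex_qt_small : forall M t, (1 <= M)%nat -> Rabs t <= 1 -> ex_series (qt M t).
Proof. intros. apply ex_series_dom with 4. intros; apply qt_bound; auto. Qed.

Lemma half_small : Rabs (1/2) < PI / 2.
Proof. rewrite Rabs_right by lra. pose proof PI_bounds. lra. Qed.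

Lemma ex_qt0 : forall t, Rabs t < PI / 2 -> ex_series (qt 0 t).
Proof.
  intros t Ht. exists (sec t). apply is_series_ext with (fun k => (-1) ^ k * 2 * mu k / (mu k ^ 2 - t ^ 2)).
  intros; rewrite qt0; auto. apply sec_pf; auto.
Qed.

Lemma ex_at : forall M, ex_series (at_ M).
Proof.
  intros [|M].
  - apply ex_series_ext with (fun k => 1 * qt 0 (1/2) k + (- (1/2) ^ 2) * qt 1 (1/2) k).
    { intros k. rewrite (qt_rec 0 (1/2) k half_small). req; ring. }
    apply ex_lin. apply ex_qt0, half_small.
    apply ex_qt_small; auto. rewrite Rabs_right; lra.
  - apply ex_at_pos. lia.
Qed.

Lemma ex_qt : forall M t, Rabs t < PI / 2 -> ex_series (qt M t).
Proof.
  induction M; intros t Ht.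
  - apply ex_qt0; auto.
  - destruct (Req_dec t 0) as [H0|H0].
    + subst. apply ex_series_ext with (at_ (S M)).
      { intros k. unfold qt, at_. pose proof (mu_pos k).
        replace (2 * S M + 1)%nat with (2 * S M + 1)%nat by lia. rewrite pow_add.
        assert (0 < mu k ^ (2 * S M)) by (apply pow_lt; lra).
        req. simpl pow at 3 4. field. split; lra. }
      apply ex_at.
    + apply ex_series_ext with (fun k => / t ^ 2 * qt M t k + (- / t ^ 2) * at_ M k).
      { intros k. rewrite (qt_rec M t k Ht). req. field; auto. }
      apply ex_lin. apply IHM; auto. apply ex_at.
Qed.

Definition Q (M : nat) (t : R) : R := Series (qt M t).
Definition A (M : nat) : R := Series (at_ M).

Lemma Q_rec : forall M t, Rabs t < PI / 2 -> Q M t = A M + t ^ 2 * Q (S M) t.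
Proof.
  intros M t Ht. unfold Q, A.
  rewrite (Series_ext _ (fun k => 1 * at_ M k + t ^ 2 * qt (S M) t k)).
  2:{ intros; rewrite qt_rec by auto; ring. }
  apply is_series_unique. pose proof (is_lin _ _ _ _ 1 (t ^ 2) (Series_correct _ (ex_at M))
      (Series_correct _ (ex_qt (S M) t Ht))) as H.
  replace (Series (at_ M) + t ^ 2 * Series (qt (S M) t)) with (1 * Series (at_ M) + t ^ 2 * Series (qt (S M) t)) by ring.
  exact H.
Qed.

Lemma Q0 : forall t, Rabs t < PI / 2 -> Q 0 t = sec t.
Proof.
  intros t Ht. unfold Q. apply is_series_unique.
  apply is_series_ext with (fun k => (-1) ^ k * 2 * mu k / (mu k ^ 2 - t ^ 2)).
  intros; rewrite qt0; auto. apply sec_pf; auto.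
Qed.

Fixpoint Ppoly (M : nat) (t : R) : R :=
  match M with O => 0 | S m => Ppoly m t + A m * t ^ (2 * m) end.

Lemma sec_expand : forall M t, Rabs t < PI / 2 -> sec t = Ppoly M t + t ^ (2 * M) * Q M t.
Proof.
  induction M; intros t Ht.
  - simpl. rewrite Q0 by auto. ring.
  - rewrite IHM by auto. rewrite Q_rec with (M := M) by auto. simpl Ppoly.
    replace (2 * S M)%nat with (2 * M + 2)%nat by lia. replace (M + (M + 0))%nat with (2 * M)%nat by lia. rewrite pow_add. ring.
Qed.

Lemma Q_bound : forall M t, (1 <= M)%nat -> Rabs t <= 1 -> Rabs (Q M t) <= 4.
Proof.
  intros M t HM Ht. unfold Q.
  assert (Hex : ex_series (fun k => Rabs (qt M t k))).
  { apply ex_series_dom with 4. intros k. rewrite Rabs_Rabsolu. apply qt_bound; auto. }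
  eapply Rle_trans. apply Series_Rabs; auto.
  apply Rle_trans with (Series (fun k => 4 * tel k)).
  - apply Series_le. intros k. split. apply Rabs_pos. apply qt_bound; auto.
    exists (4 * 1). apply (is_series_scal_l 4 tel 1 is_series_tel).
  - rewrite Series_scal_l, Series_tel. lra.
Qed.


Lemma fin_bounded : forall (u : nat -> R) N, exists M, forall n, (n < N)%nat -> Rabs (u n) <= M.
Proof.
  intros u N. induction N.
  - exists 0. intros; lia.
  - destruct IHN as [M HM]. exists (Rmax M (Rabs (u N))). intros n Hn.
    destruct (Nat.eq_dec n N). subst. apply Rmax_r.
    eapply Rle_trans. apply HM. lia. apply Rmax_l.
Qed.

Lemma cv0_bounded : forall u, is_lim_seq u 0 -> exists M, forall n, Rabs (u n) <= M.
Proof.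
  intros u Hu. apply is_lim_seq_Reals in Hu. destruct (Hu 1 ltac:(lra)) as [N HN].
  destruct (fin_bounded u N) as [M HM]. exists (Rmax M 1). intros n.
  destruct (le_lt_dec N n) as [H|H].
  - pose proof (HN n H). unfold R_dist in H0. rewrite Rminus_0_r in H0.
    eapply Rle_trans. left; apply H0. apply Rmax_r.
  - eapply Rle_trans. apply HM; auto. apply Rmax_l.
Qed.

Lemma lim0_unique : forall F a K, 0 <= K -> continuity_pt F 0 ->
  (forall t, 0 < t <= 1 -> Rabs (F t - a) <= K * t) -> F 0 = a.
Proof.
  intros F a K HK Hc Hb.
  destruct (Req_dec (F 0) a) as [|Hne]; auto. exfalso.
  set (e := Rabs (F 0 - a) / 2).
  assert (He : 0 < e) by (unfold e; apply Rmult_lt_0_compat; [apply Rabs_pos_lt; lra | lra]).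
  unfold continuity_pt, continue_in, limit1_in, limit_in in Hc.
  destruct (Hc e He) as [d [Hd Hd2]]. simpl in Hd2. unfold R_dist in Hd2.
  set (t := Rmin (d / 2) (Rmin 1 (e / (2 * (K + 1))))).
  assert (Ht1 : 0 < t).
  { unfold t. apply Rmin_pos. lra. apply Rmin_pos. lra. apply Rmult_lt_0_compat. lra.
    apply Rinv_0_lt_compat. lra. }
  assert (Ht2 : t <= d / 2) by apply Rmin_l.
  assert (Ht3 : t <= 1) by (eapply Rle_trans; [apply Rmin_r | apply Rmin_l]).
  assert (Ht4 : t <= e / (2 * (K + 1))) by (eapply Rle_trans; [apply Rmin_r | apply Rmin_r]).
  assert (H1 : Rabs (F t - F 0) < e).
  { apply Hd2. split. unfold D_x, no_cond. split; auto. lra.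
    rewrite Rminus_0_r, Rabs_right; lra. }
  pose proof (Hb t (conj Ht1 Ht3)) as H2.
  assert (H3 : K * t <= e / 2).
  { apply Rle_trans with (K * (e / (2 * (K + 1)))). apply Rmult_le_compat_l; auto.
    unfold Rdiv. rewrite Rinv_mult. 
    assert (K * (e * (/ 2 * / (K + 1))) = (e / 2) * (K / (K + 1))) by (field; lra).
    rewrite H. assert (K / (K + 1) <= 1).
    { unfold Rdiv. apply Rmult_le_reg_r with (K + 1). lra. rewrite Rmult_assoc, Rinv_l; lra. }
    nra. }
  assert (Rabs (F 0 - a) <= Rabs (F t - F 0) + Rabs (F t - a)).
  { replace (F 0 - a) with (- (F t - F 0) + (F t - a)) by ring.
    eapply Rle_trans. apply Rabs_triang. rewrite Rabs_Ropp. lra. }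
  unfold e in *. lra.
Qed.

Definition cE (E : nat -> R) (n : nat) : R := E n / INR (fact n).

Lemma cE_series : forall E, is_Euler_seq E ->
  forall t, Rabs t < PI / 2 -> is_series (fun n => cE E n * t ^ n) (sec t).
Proof.
  intros E hE t Ht. pose proof (proj2 (is_series_Reals _ _) (hE t Ht)) as H.
  apply is_series_ext with (2 := H). intros n. unfold cE. req. unfold Rdiv. ring.
Qed.

Lemma rbar_ge_lt : forall (L : Rbar) (r s : R), Rbar_le r L -> s < r -> Rbar_lt s L.
Proof. intros L r s H1 H2. destruct L; simpl in *; auto; lra. Qed.

Lemma cE_radius : forall E, is_Euler_seq E -> Rbar_le (3/2) (CV_radius (cE E)).
Proof.
  intros E hE. destruct (CV_radius_bounded (cE E)) as [Hub _]. apply Hub.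
  assert (Hr : Rabs (3/2) < PI / 2) by (rewrite Rabs_right; pose proof PI_bounds; lra).
  pose proof (ex_series_lim_0 _ (ex_intro _ _ (cE_series E hE _ Hr))) as H0.
  apply cv0_bounded in H0. exact H0.
Qed.

Lemma PS_decr_n_radius : forall a n, CV_radius (PS_decr_n a n) = CV_radius a.
Proof.
  intros a n. induction n.
  - apply CV_radius_ext. intros; unfold PS_decr_n; auto.
  - rewrite <- IHn. rewrite <- (CV_radius_decr_1 (PS_decr_n a n)). apply CV_radius_ext.
    intros k. unfold PS_decr_n, PS_decr_1. f_equal. lia.
Qed.

Fixpoint pc (c : nat -> R) (n : nat) (t : R) : R :=
  match n with O => 0 | S m => pc c m t + c m * t ^ m end.

Lemma pc_sum : forall c m t, sum_f_R0 (fun k => c k * t ^ k) m = pc c (S m) t.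
Proof. induction m; intros; simpl. ring. rewrite IHm. simpl. ring. Qed.

Lemma PSeries_split : forall c n t, ex_pseries c t ->
  PSeries c t = pc c n t + t ^ n * PSeries (PS_decr_n c n) t.
Proof.
  intros c n t H. destruct n.
  - simpl. rewrite Rplus_0_l, Rmult_1_l. apply PSeries_ext. intros; unfold PS_decr_n; auto.
  - rewrite (PSeries_decr_n c n t H). rewrite pc_sum. auto.
Qed.

Lemma pc_even : forall c M t, (forall j, (j < M)%nat -> c (2 * j)%nat = A j /\ c (S (2 * j)) = 0) ->
  pc c (2 * M) t = Ppoly M t.
Proof.
  intros c M t. induction M; intros H.
  - simpl. auto.
  - replace (2 * S M)%nat with (S (S (2 * M))) by lia. cbn [pc Ppoly].
    rewrite IHM by (intros; apply H; lia).
    destruct (H M ltac:(lia)) as [H1 H2]. rewrite H1, H2.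
    replace (M + (M + 0))%nat with (2 * M)%nat by lia. ring.
Qed.

Theorem cE_coef : forall E, is_Euler_seq E -> forall M, cE E (2 * M) = A M /\ cE E (S (2 * M)) = 0.
Proof.
  intros E hE.
  set (c := cE E).
  assert (Hrad : forall t, Rabs t <= 1 -> Rbar_lt (Rabs t) (CV_radius c)).
  { intros t Ht. apply rbar_ge_lt with (3/2). apply cE_radius; auto. lra. }
  assert (Hsec : forall t, Rabs t <= 1 -> PSeries c t = sec t).
  { intros t Ht. unfold PSeries. apply is_series_unique. apply cE_series; auto.
    pose proof PI_bounds; lra. }
  assert (Hsplit : forall n t, Rabs t <= 1 -> sec t = pc c n t + t ^ n * PSeries (PS_decr_n c n) t).
  { intros n t Ht. rewrite <- Hsec by auto. apply PSeries_split. apply CV_radius_inside. auto. }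
  assert (Hcont : forall n, continuity_pt (PSeries (PS_decr_n c n)) 0).
  { intros n. apply PSeries_continuity. rewrite PS_decr_n_radius. apply Hrad. rewrite Rabs_R0; lra. }
  assert (Hval : forall n, PSeries (PS_decr_n c n) 0 = c n).
  { intros n. rewrite PSeries_0. unfold PS_decr_n. f_equal. lia. }
  assert (Hsm : forall t, 0 < t <= 1 -> Rabs t <= 1 /\ Rabs t < PI / 2).
  { intros t Ht. rewrite Rabs_right by lra. pose proof PI_bounds. lra. }
  intros M. induction M as [M IH] using (well_founded_induction lt_wf).
  assert (Hpc : forall t, pc c (2 * M) t = Ppoly M t).
  { intros t. apply pc_even. intros j Hj. apply IH. auto. }
  assert (Heven : c (2 * M)%nat = A M).
  { rewrite <- Hval. apply lim0_unique with (K := 4). lra. apply Hcont.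
    intros t Ht. destruct (Hsm t Ht) as [Ht1 Ht2].
    pose proof (Hsplit (2 * M)%nat t Ht1) as E1. rewrite Hpc in E1.
    pose proof (sec_expand M t Ht2) as E2.
    assert (Htp : 0 < t ^ (2 * M)) by (apply pow_lt; lra).
    assert (E3 : PSeries (PS_decr_n c (2 * M)) t = Q M t).
    { apply Rmult_eq_reg_l with (t ^ (2 * M)). lra. lra. }
    rewrite E3, (Q_rec M t Ht2). replace (A M + t ^ 2 * Q (S M) t - A M) with (t ^ 2 * Q (S M) t) by ring.
    rewrite Rabs_mult. pose proof (Q_bound (S M) t ltac:(lia) Ht1).
    rewrite Rabs_right by (apply Rle_ge, pow_le; lra).
    assert (t ^ 2 <= t) by (simpl; nra). pose proof (Rabs_pos (Q (S M) t)).
    assert (0 <= t ^ 2) by (apply pow_le; lra). nra. }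
  split; auto.
  rewrite <- Hval. apply lim0_unique with (K := 4). lra. apply Hcont.
  intros t Ht. destruct (Hsm t Ht) as [Ht1 Ht2].
  pose proof (Hsplit (S (2 * M)) t Ht1) as E1. cbn [pc] in E1. rewrite Hpc, Heven in E1.
  pose proof (sec_expand (S M) t Ht2) as E2. cbn [Ppoly] in E2.
  try replace (M + (M + 0))%nat with (2 * M)%nat in E2 by lia.
  assert (Htp : 0 < t ^ (2 * M)) by (apply pow_lt; lra).
  assert (E3 : t ^ S (2 * M) * PSeries (PS_decr_n c (S (2 * M))) t = t ^ S (2 * M) * (t * Q (S M) t)).
  { replace (t ^ S (2 * M) * (t * Q (S M) t)) with (t ^ (2 * S M) * Q (S M) t).
    lra. replace (2 * S M)%nat with (S (S (2 * M))) by lia. simpl. ring. }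
  apply Rmult_eq_reg_l in E3. 2:{ apply Rgt_not_eq, pow_lt; lra. }
  rewrite E3, Rminus_0_r, Rabs_mult, Rabs_right by lra.
  pose proof (Q_bound (S M) t ltac:(lia) Ht1). nra.
Qed.


Lemma is_scal : forall a l c, is_series a l -> is_series (fun k => c * a k) (c * l).
Proof. intros a l c H. exact (is_series_scal_l c a l H). Qed.

Lemma sum_n_R : forall a n, sum_n a (S n) = sum_n a n + a (S n).
Proof. intros. rewrite sum_Sn. auto. Qed.

Lemma series_pair_ge : forall (a : nat -> R) L, is_series a L ->
  (forall m, 0 <= a (2 * m)%nat + a (S (2 * m))) -> a 0%nat + a 1%nat <= L.
Proof.
  intros a L HL Hp.
  assert (Hs : forall m, a 0%nat + a 1%nat <= sum_n a (S (2 * m))).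
  { induction m.
    - simpl. rewrite sum_n_R, sum_O. simpl. lra.
    - replace (S (2 * S m)) with (S (S (S (2 * m)))) by lia.
      rewrite sum_n_R, sum_n_R.
      pose proof (Hp (S m)). replace (2 * S m)%nat with (S (S (2 * m))) in H by lia.
      change plus with Rplus in *. simpl in *. lra. }
  assert (Hl : is_lim_seq (fun m => sum_n a (S (2 * m))) L).
  { apply (is_lim_seq_subseq (sum_n a) L (fun m => S (2 * m))).
    apply eventually_subseq. intros; lia. apply HL. }
  pose proof (is_lim_seq_le _ _ _ _ Hs (is_lim_seq_const _) Hl). simpl in H. auto.
Qed.

Lemma series_pos : forall (a : nat -> R) L, is_series a L -> (forall k, 0 <= a k) -> 0 < a 1%nat -> 0 < L.
Proof.
  intros a L HL Hp H1.
  assert (a 0%nat + a 1%nat <= L).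
  { apply series_pair_ge; auto. intros m. pose proof (Hp (2*m)%nat). pose proof (Hp (S (2*m))). lra. }
  pose proof (Hp 0%nat). lra.
Qed.

Lemma mu_pow_lt : forall j k p, (j < k)%nat -> (0 < p)%nat -> mu j ^ p < mu k ^ p.
Proof.
  intros j k p Hjk Hp. pose proof (mu_lt j k Hjk). pose proof (mu_pos j).
  destruct p. lia. clear Hp. induction p. simpl; lra.
  change (mu j ^ S (S p)) with (mu j * mu j ^ S p). change (mu k ^ S (S p)) with (mu k * mu k ^ S p).
  assert (0 < mu j ^ S p) by (apply pow_lt; lra). nra.
Qed.

Lemma A_lower : forall M, 2 / mu 0 ^ (2 * M + 1) - 2 / mu 1 ^ (2 * M + 1) <= A M.
Proof.
  intros M. unfold A.
  replace (2 / mu 0 ^ (2 * M + 1) - 2 / mu 1 ^ (2 * M + 1)) with (at_ M 0 + at_ M 1)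
    by (unfold at_; rewrite pow_O, pow_1; unfold Rdiv; ring).
  apply series_pair_ge. apply Series_correct, ex_at.
  - intros m. unfold at_. rewrite pow_1_even, pow_1_odd.
    pose proof (mu_pow_lt (2 * m) (S (2 * m)) (2 * M + 1) ltac:(lia) ltac:(lia)).
    pose proof (mu_pos (2 * m)).
    assert (0 < mu (2 * m) ^ (2 * M + 1)) by (apply pow_lt; lra).
    assert (/ mu (S (2 * m)) ^ (2 * M + 1) <= / mu (2 * m) ^ (2 * M + 1)) by (apply Rinv_le_contravar; lra).
    unfold Rdiv. lra.
Qed.

Lemma A_pos : forall M, 0 < A M.
Proof.
  intros M. eapply Rlt_le_trans; [|apply A_lower].
  pose proof (mu_pow_lt 0 1 (2 * M + 1) ltac:(lia) ltac:(lia)).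
  pose proof (mu_pos 0). assert (0 < mu 0 ^ (2 * M + 1)) by (apply pow_lt; lra).
  assert (/ mu 1 ^ (2 * M + 1) < / mu 0 ^ (2 * M + 1)) by (apply Rinv_lt_contravar; nra).
  unfold Rdiv. lra.
Qed.

Lemma A0 : A 0 = 1.
Proof.
  pose proof (Q_rec 0 0 ltac:(rewrite Rabs_R0; pose proof PI_bounds; lra)) as H.
  rewrite Q0 in H by (rewrite Rabs_R0; pose proof PI_bounds; lra).
  unfold sec in H. rewrite cos_0, Rinv_1 in H. simpl in H. lra.
Qed.

Definition wt (t : R) (k : nat) : R := 2 / (mu k ^ 2 * (mu k ^ 2 - t ^ 2)).

Lemma ex_t0 : ex_series t0.
Proof. apply ex_series_dom with 2. intros; apply t0_bound. Qed.

Lemma tt_series : forall t, 0 < t < PI / 2 -> is_series (tt t) (tan t / t).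
Proof.
  intros t Ht. assert (Ha : Rabs t < PI / 2) by (rewrite Rabs_right; lra).
  pose proof (is_scal _ _ (/ t) (tan_pf t Ha)) as H.
  replace (tan t / t) with (/ t * tan t) by (unfold Rdiv; ring).
  apply is_series_ext with (2 := H). intros k. unfold tt. pose proof (sq_gap k t Ha).
  req. change scal with Rmult. field. lra.
Qed.

Lemma tt_split : forall t k, Rabs t < PI / 2 -> tt t k = t0 k + t ^ 2 * wt t k.
Proof.
  intros t k Ht. unfold tt, t0, wt. pose proof (sq_gap k t Ht). pose proof (mu_pos k).
  assert (0 < mu k ^ 2) by (apply pow_lt; lra). field. lra.
Qed.

Lemma ex_wt : forall t, 0 < t < PI / 2 -> ex_series (wt t).
Proof.
  intros t Ht. assert (Ha : Rabs t < PI / 2) by (rewrite Rabs_right; lra).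
  apply ex_series_ext with (fun k => / t ^ 2 * tt t k + (- / t ^ 2) * t0 k).
  { intros k. rewrite tt_split by auto. req. field. lra. }
  apply ex_lin. eexists; apply tt_series; auto. apply ex_t0.
Qed.

Lemma wt_pos : forall t k, Rabs t < PI / 2 -> 0 <= wt t k.
Proof.
  intros t k Ht. unfold wt. pose proof (sq_gap k t Ht). pose proof (mu_pos k).
  assert (0 < mu k ^ 2) by (apply pow_lt; lra).
  left. apply Rmult_lt_0_compat. lra. apply Rinv_0_lt_compat. nra.
Qed.

Lemma wt_bound : forall t k, Rabs t <= 1 -> wt t k <= 4 * tel k.
Proof.
  intros t k Ht. pose proof (sq_le1 t Ht). pose proof (mu_pos k). pose proof (mu_sq_tel k).
  assert (Hm2 : 2 <= mu k ^ 2) by (simpl; nra).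
  unfold wt, Rdiv.
  apply Rle_trans with (2 * / (mu k ^ 2 * (mu k ^ 2 / 2))).
  - apply Rmult_le_compat_l. lra. apply Rinv_le_contravar. nra. apply Rmult_le_compat_l; lra.
  - replace (2 * / (mu k ^ 2 * (mu k ^ 2 / 2))) with (4 * / mu k ^ 2 * / mu k ^ 2) by (field; lra).
    assert (/ mu k ^ 2 <= 1) by (rewrite <- Rinv_1; apply Rinv_le_contravar; lra).
    assert (0 < / mu k ^ 2) by (apply Rinv_0_lt_compat; lra). nra.
Qed.

Definition Tq (t : R) : R := Series (tt t).
Definition W (t : R) : R := Series (wt t).

Lemma Tq_split : forall t, 0 < t < PI / 2 -> Tq t = Series t0 + t ^ 2 * W t.
Proof.
  intros t Ht. assert (Ha : Rabs t < PI / 2) by (rewrite Rabs_right; lra).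
  unfold Tq, W. rewrite (Series_ext _ (fun k => t0 k + t ^ 2 * wt t k)) by (intros; apply tt_split; auto).
  rewrite Series_plus. rewrite Series_scal_l. auto. apply ex_t0.
  destruct (ex_wt t Ht) as [l Hl]. exists (t ^ 2 * l). apply (is_series_scal_l (t ^ 2) _ _ Hl).
Qed.

Lemma W_nonneg : forall t, 0 < t < PI / 2 -> 0 <= W t.
Proof.
  intros t Ht. assert (Ha : Rabs t < PI / 2) by (rewrite Rabs_right; lra).
  unfold W. pose proof (Series_correct _ (ex_wt t Ht)) as H.
  pose proof (is_lim_seq_le (fun _ => 0) (sum_n (wt t)) 0 (Series (wt t))) as H2.
  apply H2. intros n. induction n. rewrite sum_O. apply wt_pos; auto.
  rewrite sum_Sn. change plus with Rplus. pose proof (wt_pos t (S n) Ha). lra.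
  apply is_lim_seq_const. apply H.
Qed.

Lemma W_le : forall t, 0 < t <= 1 -> W t <= 4.
Proof.
  intros t Ht. assert (Ha : Rabs t < PI / 2) by (rewrite Rabs_right; pose proof PI_bounds; lra).
  assert (Ht' : 0 < t < PI / 2) by (pose proof PI_bounds; lra).
  unfold W. apply Rle_trans with (Series (fun k => 4 * tel k)).
  - apply Series_le. intros k. split. apply wt_pos; auto. apply wt_bound. rewrite Rabs_right; lra.
    exists (4 * 1). apply (is_series_scal_l 4 tel 1 is_series_tel).
  - rewrite Series_scal_l, Series_tel. lra.
Qed.

Lemma tan_x_bound : forall t, 0 < t <= 1 -> Rabs (tan t / t - 1) <= t ^ 2.
Proof.
  intros t Ht. pose proof PI_bounds.
  destruct (sin_bounds t) as [Hs1 _]; [lra|].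
  destruct (cos_bounds t) as [Hc1 _]; [lra|].
  pose proof (sin_lt_x t ltac:(lra)) as Hs2. pose proof (COS_bound t) as [_ Hc2].
  assert (Hsl : t - t^3/6 <= sin t).
  { assert (t^5/120 - t^7/5040 >= 0).
    { assert (t^7 <= t^5). { replace (t^7) with (t^5 * (t*t)) by ring.
        assert (0 < t^5) by (apply pow_lt; lra). assert (t*t <= 1) by nra. nra. }
      assert (0 < t^5) by (apply pow_lt; lra). lra. }
    lra. }
  assert (Hcl : 1 - t^2/2 <= cos t).
  { assert (t^4/24 - t^6/720 >= 0).
    { assert (t^6 <= t^4). { replace (t^6) with (t^4 * (t*t)) by ring.
        assert (0 < t^4) by (apply pow_lt; lra). assert (t*t <= 1) by nra. nra. }
      assert (0 < t^4) by (apply pow_lt; lra). lra. }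
    lra. }
  assert (Hc0 : 1/2 <= cos t) by (simpl in Hcl; nra).
  unfold tan. replace (sin t / cos t / t - 1) with ((sin t - t * cos t) / (t * cos t)) by (field; lra).
  unfold Rdiv. rewrite Rabs_mult, Rabs_inv, (Rabs_right (t * cos t)) by nra.
  assert (Hn : Rabs (sin t - t * cos t) <= t ^ 3 / 2).
  { apply Rabs_le. simpl in *. split; nra. }
  apply Rle_trans with (t ^ 3 / 2 * / (t * (1/2))).
  - apply Rmult_le_compat. apply Rabs_pos. left; apply Rinv_0_lt_compat; nra. auto.
    apply Rinv_le_contravar; nra.
  - right. field. lra.
Qed.

Lemma L0_eq : Series t0 = 1.
Proof.
  set (L := Series t0).
  apply (lim0_unique (fun _ => L) 1 5). lra. apply continuity_pt_const. unfold constant; auto.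
  intros t Ht. assert (Ht' : 0 < t < PI / 2) by (pose proof PI_bounds; lra).
  pose proof (Tq_split t Ht') as E1. pose proof (is_series_unique _ _ (tt_series t Ht')) as E2.
  fold (Tq t) in E2. pose proof (tan_x_bound t Ht) as B1. pose proof (W_le t Ht). pose proof (W_nonneg t Ht').
  fold L in E1. rewrite E2 in E1.
  assert (t ^ 2 <= t) by (simpl; nra). assert (0 <= t ^ 2) by (apply pow_le; lra).
  replace (L - 1) with ((tan t / t - 1) - t ^ 2 * W t) by lra.
  eapply Rle_trans. apply Rabs_triang. rewrite Rabs_Ropp, Rabs_mult, (Rabs_right (t ^ 2)) by lra.
  rewrite (Rabs_right (W t)) by lra. nra.
Qed.

Lemma Tq_ge1 : forall t, 0 < t < PI / 2 -> 1 <= Tq t.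
Proof.
  intros t Ht. rewrite Tq_split, L0_eq by auto. pose proof (W_nonneg t Ht).
  assert (0 <= t ^ 2) by (apply pow_le; lra). nra.
Qed.

Lemma tan_Tq : forall t, 0 < t < PI / 2 -> tan t = t * Tq t.
Proof.
  intros t Ht. unfold Tq. rewrite (is_series_unique _ _ (tt_series t Ht)). field. lra.
Qed.


Lemma sign_le : forall k r, 0 <= r -> (-1) ^ k * r <= r.
Proof.
  intros k r Hr. destruct (Nat.Even_or_Odd k) as [[m Hm]|[m Hm]]; subst k.
  - rewrite pow_1_even. lra.
  - replace (2 * m + 1)%nat with (S (2 * m)) by lia. rewrite pow_1_odd. lra.
Qed.

Lemma Tq_correct : forall t, 0 < t < PI / 2 -> is_series (tt t) (Tq t).
Proof. intros t Ht. unfold Tq. apply Series_correct. eexists; apply tt_series; auto. Qed.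

Lemma Q_correct : forall M t, Rabs t < PI / 2 -> is_series (qt M t) (Q M t).
Proof. intros. apply Series_correct, ex_qt; auto. Qed.

Lemma absx : forall x, 0 < x < PI / 2 -> Rabs x < PI / 2.
Proof. intros. rewrite Rabs_right; lra. Qed.

Lemma main_upper : forall N x, (1 <= N)%nat -> 0 < x < PI / 2 ->
  Q N x < mu 0 / mu 0 ^ (2 * N) * Tq x.
Proof.
  intros N x HN Hx. pose proof (absx x Hx) as Ha.
  set (C := mu 0 / mu 0 ^ (2 * N)).
  pose proof (is_lin _ _ _ _ C (-1) (Tq_correct x Hx) (Q_correct N x Ha)) as H.
  assert (0 < C * Tq x + -1 * Q N x); [|lra].
  apply (series_pos _ _ H).
  - intros k. pose proof (sq_gap k x Ha). pose proof (mu_pos k). pose proof (mu_pos 0).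
    unfold tt, qt, C.
    replace (2 * N)%nat with (S (2 * N - 1)) by lia.
    assert (0 < mu k ^ (2 * N - 1)) by (apply pow_lt; lra).
    assert (0 < mu 0 ^ (2 * N - 1)) by (apply pow_lt; lra).
    replace (mu 0 / mu 0 ^ S (2 * N - 1) * (2 / (mu k ^ 2 - x ^ 2)) +
      -1 * ((-1) ^ k * 2 * mu k / (mu k ^ S (2 * N - 1) * (mu k ^ 2 - x ^ 2))))
      with (2 / (mu k ^ 2 - x ^ 2) * (/ mu 0 ^ (2 * N - 1) - (-1) ^ k * / mu k ^ (2 * N - 1)))
      by (change (mu k ^ S (2 * N - 1)) with (mu k * mu k ^ (2 * N - 1));
          change (mu 0 ^ S (2 * N - 1)) with (mu 0 * mu 0 ^ (2 * N - 1)); field; repeat split; lra).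
    apply Rmult_le_pos. left; unfold Rdiv; apply Rmult_lt_0_compat; [lra| apply Rinv_0_lt_compat; lra].
    assert (/ mu k ^ (2 * N - 1) <= / mu 0 ^ (2 * N - 1)).
    { destruct k. lra. left. apply Rinv_lt_contravar. nra. apply mu_pow_lt; lia. }
    pose proof (sign_le k (/ mu k ^ (2 * N - 1)) ltac:(left; apply Rinv_0_lt_compat; lra)). lra.
  - pose proof (sq_gap 1 x Ha). pose proof (mu_pos 1). pose proof (mu_pos 0).
    unfold tt, qt, C.
    replace (2 * N)%nat with (S (2 * N - 1)) by lia.
    assert (0 < mu 1 ^ (2 * N - 1)) by (apply pow_lt; lra).
    assert (0 < mu 0 ^ (2 * N - 1)) by (apply pow_lt; lra).
    replace (mu 0 / mu 0 ^ S (2 * N - 1) * (2 / (mu 1 ^ 2 - x ^ 2)) +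
      -1 * ((-1) ^ 1 * 2 * mu 1 / (mu 1 ^ S (2 * N - 1) * (mu 1 ^ 2 - x ^ 2))))
      with (2 / (mu 1 ^ 2 - x ^ 2) * (/ mu 0 ^ (2 * N - 1) + / mu 1 ^ (2 * N - 1)))
      by (change (mu 1 ^ S (2 * N - 1)) with (mu 1 * mu 1 ^ (2 * N - 1));
          change (mu 0 ^ S (2 * N - 1)) with (mu 0 * mu 0 ^ (2 * N - 1)); rewrite pow_1; field; repeat split; lra).
    apply Rmult_lt_0_compat. unfold Rdiv; apply Rmult_lt_0_compat; [lra| apply Rinv_0_lt_compat; lra].
    assert (0 < / mu 1 ^ (2 * N - 1)) by (apply Rinv_0_lt_compat; lra).
    assert (0 < / mu 0 ^ (2 * N - 1)) by (apply Rinv_0_lt_compat; lra). lra.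
Qed.

Lemma v_nonpos : forall N k, (1 <= N)%nat -> (1 <= k)%nat ->
  at_ N k - A N * t0 k <= 0.
Proof.
  intros N k HN Hk. pose proof (A_pos N) as HA. pose proof (mu_pos k) as Hmk. pose proof (mu_pos 0) as Hm0.
  assert (Hmk2 : 0 < mu k ^ 2) by (apply pow_lt; lra).
  unfold at_, t0.
  destruct (Nat.Even_or_Odd k) as [[m Hm]|[m Hm]].
  - subst k. rewrite pow_1_even.
    assert (Hm1 : (1 <= m)%nat) by lia.
    set (q := (2 * N - 1)%nat).
    replace (2 * N + 1)%nat with (q + 2)%nat by (unfold q; lia).
    rewrite pow_add.
    assert (Hq : 0 < mu (2 * m) ^ q) by (apply pow_lt; lra).
    enough (1 <= A N * mu (2 * m) ^ q).
    { assert (2 / (mu (2 * m) ^ q * mu (2 * m) ^ 2) = 2 / mu (2 * m) ^ 2 * / mu (2 * m) ^ q) by (field; lra).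
      rewrite Rmult_1_l, H0.
      assert (/ mu (2 * m) ^ q <= A N).
      { apply Rmult_le_reg_r with (mu (2 * m) ^ q). lra. rewrite Rinv_l by lra. lra. }
      assert (0 < 2 / mu (2 * m) ^ 2) by (unfold Rdiv; apply Rmult_lt_0_compat; [lra|apply Rinv_0_lt_compat; lra]).
      unfold Rdiv at 2. nra. }
    pose proof (A_lower N) as HAl. rewrite mu_1 in HAl.
    replace (2 * N + 1)%nat with (q + 2)%nat in HAl by (unfold q; lia).
    rewrite Rpow_mult_distr, !pow_add in HAl.
    assert (H3 : 3 <= 3 ^ q) by (replace 3 with (3 ^ 1) at 1 by ring; apply Rle_pow; unfold q; [lra|lia]).
    assert (H5 : 5 <= 5 ^ q) by (replace 5 with (5 ^ 1) at 1 by ring; apply Rle_pow; unfold q; [lra|lia]).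
    assert (Hp0 : 0 < mu 0 ^ q) by (apply pow_lt; lra).
    assert (Hm02 : mu 0 ^ 2 <= 4) by (rewrite mu_0; pose proof PI_bounds; simpl; nra).
    assert (Hm02' : 0 < mu 0 ^ 2) by (apply pow_lt; lra).
    assert (HAl2 : 4 / 3 / (mu 0 ^ q * mu 0 ^ 2) <= A N).
    { eapply Rle_trans; [|apply HAl].
      assert (3 ^ 2 = 9) by (simpl; ring). rewrite H.
      assert (E : 2 / (mu 0 ^ q * mu 0 ^ 2) - 2 / (3 ^ q * 9 * (mu 0 ^ q * mu 0 ^ 2))
        = (2 - 2 / (3 ^ q * 9)) / (mu 0 ^ q * mu 0 ^ 2)) by (field; split; lra).
      rewrite E. unfold Rdiv. apply Rmult_le_compat_r. left; apply Rinv_0_lt_compat; nra.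
      assert (/ (3 ^ q * 9) <= / 27) by (apply Rinv_le_contravar; lra). lra. }
    assert (Hmu : 5 * mu 0 ^ q <= mu (2 * m) ^ q).
    { apply Rle_trans with (mu 2 ^ q).
      - rewrite mu_2, Rpow_mult_distr. apply Rmult_le_compat_r; lra.
      - destruct (Nat.eq_dec m 1). subst. simpl (2 * 1)%nat. lra.
        left. apply mu_pow_lt; unfold q; lia. }
    apply Rle_trans with (4 / 3 / (mu 0 ^ q * mu 0 ^ 2) * (5 * mu 0 ^ q)).
    + replace (4 / 3 / (mu 0 ^ q * mu 0 ^ 2) * (5 * mu 0 ^ q)) with (20 / 3 / mu 0 ^ 2) by (field; lra).
      apply Rmult_le_reg_r with (mu 0 ^ 2). lra. unfold Rdiv. rewrite Rmult_assoc, Rinv_l; lra.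
    + apply Rmult_le_compat; try lra. left; unfold Rdiv; apply Rmult_lt_0_compat; [lra|]. apply Rinv_0_lt_compat; nra.
  - subst k. replace (2 * m + 1)%nat with (S (2 * m)) by lia. rewrite pow_1_odd.
    assert (0 < 2 / mu (S (2 * m)) ^ (2 * N + 1)).
    { unfold Rdiv. apply Rmult_lt_0_compat. lra. apply Rinv_0_lt_compat, pow_lt. pose proof (mu_pos (S (2*m))). lra. }
    assert (0 < 2 / mu (S (2 * m)) ^ 2).
    { unfold Rdiv. apply Rmult_lt_0_compat. lra. apply Rinv_0_lt_compat, pow_lt. pose proof (mu_pos (S (2*m))). lra. }
    nra.
Qed.

Lemma main_lower : forall N x, (1 <= N)%nat -> 0 < x < PI / 2 -> A N * Tq x < Q N x.
Proof.
  intros N x HN Hx. pose proof (absx x Hx) as Ha.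
  rewrite (Q_rec N x Ha), (Tq_split x Hx), L0_eq.
  set (v := fun k => at_ N k - A N * t0 k).
  assert (Hv : is_series v 0).
  { replace 0 with (1 * A N + (- A N) * 1) by ring.
    apply is_series_ext with (fun k => 1 * at_ N k + (- A N) * t0 k).
    { intros k. unfold v. req. ring. }
    apply is_lin. apply Series_correct, ex_at. rewrite <- L0_eq. apply Series_correct, ex_t0. }
  set (g := mu 0 ^ 2 - x ^ 2).
  assert (Hg : 0 < g) by (unfold g; apply sq_gap; auto).
  pose proof (is_lin _ _ _ _ 1 (- A N) (Q_correct (S N) x Ha) (Series_correct _ (ex_wt x Hx))) as H1.
  pose proof (is_lin _ _ _ _ 1 (- / g) H1 Hv) as H2.
  fold (W x) in H2.
  assert (Hpos : 0 < 1 * (1 * Q (S N) x + - A N * W x) + - / g * 0).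
  { apply (series_pos _ _ H2).
    - intros k. pose proof (sq_gap k x Ha). pose proof (mu_pos k). pose proof (mu_pos 0).
      assert (Hmk : 0 < mu k ^ 2) by (apply pow_lt; lra).
      assert (Hp : 0 < mu k ^ (2 * N + 1)) by (apply pow_lt; lra).
      assert (E : 1 * (1 * qt (S N) x k + - A N * wt x k) + - / g * v k =
        v k * (/ (mu k ^ 2 - x ^ 2) - / g)).
      { unfold v, qt, wt, at_, t0. replace (2 * S N)%nat with (S (2 * N + 1)) by lia.
        change (mu k ^ S (2 * N + 1)) with (mu k * mu k ^ (2 * N + 1)).
        field. repeat split; lra. }
      rewrite E. destruct k.
      + unfold g. replace (/ (mu 0 ^ 2 - x ^ 2) - / (mu 0 ^ 2 - x ^ 2)) with 0 by ring. lra.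
      + pose proof (v_nonpos N (S k) HN ltac:(lia)) as Hvk. fold v in Hvk.
        assert (mu 0 ^ 2 < mu (S k) ^ 2) by (apply mu_pow_lt; lia).
        assert (/ (mu (S k) ^ 2 - x ^ 2) <= / g) by (apply Rinv_le_contravar; unfold g in *; lra).
        unfold v in *. nra.
    - pose proof (sq_gap 1 x Ha). pose proof (mu_pos 1). pose proof (mu_pos 0).
      assert (Hmk : 0 < mu 1 ^ 2) by (apply pow_lt; lra).
      assert (Hp : 0 < mu 1 ^ (2 * N + 1)) by (apply pow_lt; lra).
      assert (E : 1 * (1 * qt (S N) x 1 + - A N * wt x 1) + - / g * v 1%nat =
        v 1%nat * (/ (mu 1 ^ 2 - x ^ 2) - / g)).
      { unfold v, qt, wt, at_, t0. replace (2 * S N)%nat with (S (2 * N + 1)) by lia.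
        change (mu 1 ^ S (2 * N + 1)) with (mu 1 * mu 1 ^ (2 * N + 1)).
        field. repeat split; lra. }
      rewrite E.
      assert (mu 0 ^ 2 < mu 1 ^ 2) by (apply mu_pow_lt; lia).
      assert (/ (mu 1 ^ 2 - x ^ 2) < / g) by (apply Rinv_lt_contravar; unfold g in *; nra).
      assert (Hv1 : v 1%nat < 0).
      { unfold v, at_, t0. rewrite pow_1. pose proof (A_pos N).
        assert (0 < 2 / mu 1 ^ (2 * N + 1)) by (unfold Rdiv; apply Rmult_lt_0_compat; [lra|apply Rinv_0_lt_compat; lra]).
        assert (0 < 2 / mu 1 ^ 2) by (unfold Rdiv; apply Rmult_lt_0_compat; [lra|apply Rinv_0_lt_compat; lra]).
        unfold Rdiv in *. nra. }
      nra. }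
  assert (0 < x ^ 2) by (apply pow_lt; lra). nra.
Qed.

Lemma is_incr1 : forall (a : nat -> R) (L : R), is_series a L -> is_series (fun k => a (S k)) (L - a O).
Proof.
  intros a L H. apply is_series_incr_1.
  match goal with |- is_series _ ?p => replace p with L end. exact H.
  simpl. unfold plus. simpl. ring.
Qed.

Lemma jordan_series : forall x, 0 < x < PI / 2 -> sec x < mu 0 * Tq x.
Proof.
  intros x Hx. pose proof (absx x Hx) as Ha.
  pose proof (is_lin _ _ _ _ (mu 0) (-1) (Tq_correct x Hx) (Q_correct 0 x Ha)) as H.
  rewrite Q0 in H by auto.
  set (e := fun k => mu 0 * tt x k + -1 * qt 0 x k) in H.
  assert (He0 : e 0%nat = 0).
  { unfold e, tt, qt. simpl. pose proof (sq_gap 0 x Ha). field. lra. }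
  pose proof (is_incr1 _ _ H) as Hb. rewrite He0 in Hb.
  assert (Hodd : forall m, e (S (2 * m)) = 2 * (mu (S (2 * m)) + mu 0) / (mu (S (2 * m)) ^ 2 - x ^ 2)).
  { intros m. unfold e, tt, qt. rewrite pow_1_odd. pose proof (sq_gap (S (2 * m)) x Ha).
    simpl (2 * 0)%nat. rewrite pow_O. field. lra. }
  assert (Hev : forall m, e (S (S (2 * m))) = - (2 * (mu (S (2 * m)) + mu 0)) / (mu (S (S (2 * m))) ^ 2 - x ^ 2)).
  { intros m. unfold e, tt, qt. replace (S (S (2 * m))) with (2 * S m)%nat by lia. rewrite pow_1_even.
    pose proof (sq_gap (2 * S m) x Ha).
    assert (mu (2 * S m) = mu (S (2 * m)) + 2 * mu 0) by (unfold mu; repeat (rewrite S_INR || rewrite mult_INR); simpl INR; field).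
    simpl (2 * 0)%nat. rewrite pow_O. rewrite H1. field. rewrite <- H1. lra. }
  assert (Hpair : forall m, 0 <= e (S (2 * m)) + e (S (S (2 * m)))).
  { intros m. rewrite Hodd, Hev. pose proof (sq_gap (S (2 * m)) x Ha). pose proof (sq_gap (S (S (2 * m))) x Ha).
    pose proof (mu_pow_lt (S (2 * m)) (S (S (2 * m))) 2 ltac:(lia) ltac:(lia)).
    pose proof (mu_pos (S (2 * m))). pose proof (mu_pos 0).
    assert (/ (mu (S (S (2 * m))) ^ 2 - x ^ 2) <= / (mu (S (2 * m)) ^ 2 - x ^ 2)) by (apply Rinv_le_contravar; lra).
    unfold Rdiv. rewrite Ropp_mult_distr_l_reverse. nra. }
  pose proof (series_pair_ge _ _ Hb Hpair) as Hge.
  assert (Hfirst : 0 < e 1%nat + e 2%nat).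
  { pose proof (Hodd 0%nat) as E1. pose proof (Hev 0%nat) as E2. simpl (S (2 * 0)) in E1, E2.
    rewrite E1, E2. pose proof (sq_gap 1 x Ha). pose proof (sq_gap 2 x Ha).
    pose proof (mu_pow_lt 1 2 2 ltac:(lia) ltac:(lia)).
    pose proof (mu_pos 1). pose proof (mu_pos 0).
    assert (/ (mu 2 ^ 2 - x ^ 2) < / (mu 1 ^ 2 - x ^ 2)) by (apply Rinv_lt_contravar; nra).
    unfold Rdiv. rewrite Ropp_mult_distr_l_reverse. nra. }
  simpl in Hge. lra.
Qed.


Lemma powerRZ_m1 : forall x n, x <> 0 -> powerRZ x (Z.of_nat n - 1) = x ^ n * / x.
Proof.
  intros x n Hx. unfold Z.sub. rewrite powerRZ_add by auto. rewrite <- pow_powerRZ.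
  simpl. field. auto.
Qed.

Lemma Ppoly_mono : forall N x y, 0 <= x <= y -> Ppoly N x <= Ppoly N y.
Proof.
  induction N; intros x y Hxy; simpl. lra.
  pose proof (IHN x y Hxy). pose proof (A_pos N).
  assert (x ^ (N + (N + 0)) <= y ^ (N + (N + 0))) by (apply pow_incr; lra). nra.
Qed.

Lemma Ppoly_nonneg : forall N x, 0 <= x -> 0 <= Ppoly N x.
Proof.
  induction N; intros x Hx; simpl. lra.
  pose proof (IHN x Hx). pose proof (A_pos N).
  assert (0 <= x ^ (N + (N + 0))) by (apply pow_le; lra). nra.
Qed.

Lemma absE : forall E, is_Euler_seq E -> forall N, Rabs (E (2 * N)%nat) / INR (fact (2 * N)) = A N.
Proof.
  intros E hE N. destruct (cE_coef E hE N) as [H1 _]. unfold cE in H1.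
  assert (Hf : 0 < INR (fact (2 * N))) by (apply lt_0_INR, lt_O_fact).
  unfold Rdiv in *. rewrite <- (Rabs_right (/ INR (fact (2 * N)))) by (left; apply Rinv_0_lt_compat; auto).
  rewrite <- Rabs_mult. rewrite H1. apply Rabs_right. left; apply A_pos.
Qed.

Lemma s_part_eq : forall E, is_Euler_seq E -> forall N x, s_part E N x = Ppoly N x.
Proof.
  intros E hE N x. induction N. auto.
  cbn [s_part Ppoly]. rewrite IHN. rewrite absE by auto. auto.
Qed.

Lemma K_eq : forall N, powerRZ (2 / PI) (Z.of_nat (2 * N) - 1) = mu 0 / mu 0 ^ (2 * N).
Proof.
  intros N. pose proof PI_bounds. rewrite powerRZ_m1 by (apply Rgt_not_eq; unfold Rdiv; apply Rmult_lt_0_compat; [lra| apply Rinv_0_lt_compat; lra]).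
  rewrite mu_0. replace (2 / PI) with (/ (PI / 2)) by (field; lra). rewrite pow_inv.
  field. split. apply pow_nonzero. lra. lra.
Qed.

Theorem theorem12 (E : nat -> R) (hE : is_Euler_seq E) (N : nat) :
  (forall x : R, 0 < x < PI / 2 ->
     Rabs (E (2 * N)%nat) / INR (fact (2 * N)) * powerRZ x (Z.of_nat (2 * N) - 1) * tan x
       < sec x - s_part E N x
     /\ sec x - s_part E N x
       < powerRZ (2 / PI) (Z.of_nat (2 * N) - 1) * powerRZ x (Z.of_nat (2 * N) - 1) * tan x)
  /\
  (forall c : R, c > Rabs (E (2 * N)%nat) / INR (fact (2 * N)) ->
     exists x : R, 0 < x < PI / 2 /\
       ~ (c * powerRZ x (Z.of_nat (2 * N) - 1) * tan x < sec x - s_part E N x))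
  /\
  (forall c : R, c < powerRZ (2 / PI) (Z.of_nat (2 * N) - 1) ->
     exists x : R, 0 < x < PI / 2 /\
       ~ (sec x - s_part E N x < c * powerRZ x (Z.of_nat (2 * N) - 1) * tan x)).
Proof.
  pose proof PI_bounds as HPI.
  rewrite absE by auto. rewrite K_eq.
  assert (Hrem : forall x, 0 < x < PI / 2 -> sec x - s_part E N x = x ^ (2 * N) * Q N x).
  { intros x Hx. rewrite s_part_eq by auto. rewrite (sec_expand N x (absx x Hx)). ring. }
  assert (Hform : forall c x, 0 < x < PI / 2 ->
    c * powerRZ x (Z.of_nat (2 * N) - 1) * tan x = x ^ (2 * N) * (c * Tq x)).
  { intros c x Hx. rewrite powerRZ_m1 by lra. rewrite tan_Tq by auto. field. lra. }
  assert (HQpos : forall x, 0 < x < PI / 2 -> 0 < Q N x).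
  { intros x Hx. destruct N.
    - rewrite Q0 by (apply absx; auto). unfold sec. apply Rinv_0_lt_compat, cos_gt_0; lra.
    - pose proof (main_lower (S N) x ltac:(lia) Hx). pose proof (Tq_ge1 x Hx). pose proof (A_pos (S N)). nra. }
  split; [|split].
  -
    intros x Hx. rewrite Hrem by auto. rewrite !Hform by auto.
    assert (Hxp : 0 < x ^ (2 * N)) by (apply pow_lt; lra).
    split; apply Rmult_lt_compat_l; auto.
    + destruct N.
      * rewrite A0, Q0 by (apply absx; auto). rewrite Rmult_1_l.
        unfold Tq. rewrite (is_series_unique _ _ (tt_series x Hx)). unfold tan, sec.
        pose proof (sin_lt_x x ltac:(lra)). assert (cos x > 0) by (apply cos_gt_0; lra).
        apply Rmult_lt_reg_r with (x * cos x). nra.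
        replace (sin x / cos x / x * (x * cos x)) with (sin x) by (field; lra).
        replace (/ cos x * (x * cos x)) with x by (field; lra). lra.
      * apply main_lower; auto; lia.
    + destruct N.
      * rewrite Q0 by (apply absx; auto). simpl pow. replace (mu 0 / 1) with (mu 0) by field.
        apply jordan_series; auto.
      * apply main_upper; auto; lia.
  -
    intros c Hc. pose proof (A_pos N) as HA.
    set (x := Rmin (1/2) ((c - A N) / 4)).
    assert (Hx1 : 0 < x) by (unfold x; apply Rmin_pos; lra).
    assert (Hx2 : x <= 1/2) by apply Rmin_l.
    assert (Hx3 : x <= (c - A N) / 4) by apply Rmin_r.
    assert (Hx : 0 < x < PI / 2) by lra.
    exists x. split; auto. rewrite Hrem, Hform by auto. apply Rle_not_lt.
    apply Rmult_le_compat_l. left; apply pow_lt; lra.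
    rewrite (Q_rec N x (absx x Hx)).
    pose proof (Q_bound (S N) x ltac:(lia) ltac:(rewrite Rabs_right; lra)) as HQ.
    pose proof (Tq_ge1 x Hx).
    assert (Q (S N) x <= 4) by (unfold Rabs in HQ; destruct (Rcase_abs (Q (S N) x)); lra).
    assert (0 <= x ^ 2) by (apply pow_le; lra).
    assert (x ^ 2 * Q (S N) x <= x ^ 2 * 4) by (apply Rmult_le_compat_l; lra).
    assert (x ^ 2 * 4 <= c - A N) by (simpl; nra).
    nra.
  -
    intros c Hc.
    destruct (Rle_lt_dec c 0) as [Hc0|Hc0].
    + exists 1. assert (Hx : 0 < 1 < PI / 2) by lra. split; auto.
      rewrite Hrem, Hform by auto. apply Rle_not_lt.
      pose proof (HQpos 1 Hx). pose proof (Tq_ge1 1 Hx).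
      rewrite pow1. nra.
    + destruct N.
      * simpl pow in Hc. rewrite mu_0 in Hc. replace (PI / 2 / 1) with (PI / 2) in Hc by field.
        set (x := (c + PI / 2) / 2).
        assert (Hx : 0 < x < PI / 2) by (unfold x; lra).
        exists x. split; auto. rewrite Hrem, Hform by auto. apply Rle_not_lt.
        rewrite Q0 by (apply absx; auto). simpl pow. rewrite !Rmult_1_l.
        unfold Tq. rewrite (is_series_unique _ _ (tt_series x Hx)). unfold tan, sec.
        assert (cos x > 0) by (apply cos_gt_0; lra). pose proof (SIN_bound x) as [_ Hs].
        assert (sin x > 0) by (apply sin_gt_0; lra).
        replace (c * (sin x / cos x / x)) with ((c / x) * sin x * / cos x) by (field; lra).
        assert (c / x < 1).
        { apply Rmult_lt_reg_r with x. lra. unfold Rdiv. rewrite Rmult_assoc, Rinv_l by lra. unfold x; lra. }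
        assert (0 < c / x) by (unfold Rdiv; apply Rmult_lt_0_compat; [lra| apply Rinv_0_lt_compat; lra]).
        assert (0 < / cos x) by (apply Rinv_0_lt_compat; lra).
        assert (c / x * sin x <= 1) by nra. nra.
      * set (m0 := mu 0) in *.
        assert (Hm0 : m0 = PI / 2) by (unfold m0; apply mu_0).
        set (q := (2 * S N - 1)%nat).
        assert (Hq : m0 ^ (2 * S N) = m0 ^ q * m0).
        { assert (Eq : (2 * S N = S q)%nat) by (unfold q; lia). rewrite Eq. rewrite <- tech_pow_Rmult. ring. }
        assert (Hmq : 0 < m0 ^ q) by (apply pow_lt; lra).
        rewrite Hq in Hc. replace (m0 / (m0 ^ q * m0)) with (/ m0 ^ q) in Hc by (field; split; lra).
        set (d := 1 - c * m0 ^ q).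
        assert (Hd : 0 < d).
        { unfold d. assert (c * m0 ^ q < 1); [|lra].
          apply Rmult_lt_reg_r with (/ m0 ^ q). apply Rinv_0_lt_compat; lra.
          rewrite Rmult_assoc, Rinv_r by lra. lra. }
        set (S0 := Ppoly (S N) m0).
        assert (HS0 : 0 <= S0) by (apply Ppoly_nonneg; lra).
        set (eps := Rmin (1/2) (d / (S0 + 1)) / 2).
        assert (He1 : 0 < eps) by (unfold eps; apply Rmult_lt_0_compat; [apply Rmin_pos; [lra| apply Rmult_lt_0_compat; [lra| apply Rinv_0_lt_compat; lra]] | lra]).
        assert (He2 : eps <= 1/4) by (unfold eps; pose proof (Rmin_l (1/2) (d / (S0 + 1))); lra).
        assert (He3 : eps < d / (S0 + 1)).
        { unfold eps. pose proof (Rmin_r (1/2) (d / (S0 + 1))).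
          assert (0 < d / (S0 + 1)) by (apply Rmult_lt_0_compat; [lra| apply Rinv_0_lt_compat; lra]). lra. }
        set (x := m0 - eps).
        assert (Hx : 0 < x < PI / 2) by (unfold x; lra).
        exists x. split; auto. apply Rle_not_lt.
        rewrite powerRZ_m1 by lra.
        assert (Hcos : cos x = sin eps) by (unfold x; rewrite Hm0; rewrite cos_shift; auto).
        pose proof (sin_lt_x eps He1) as Hse. assert (Hse0 : 0 < sin eps) by (apply sin_gt_0; lra).
        assert (Hcx : 0 < cos x) by lra.
        assert (Hsec : S0 + 1 < d * sec x).
        { unfold sec. rewrite Hcos. apply Rmult_lt_reg_r with (sin eps). lra.
          rewrite Rmult_assoc, Rinv_l by lra. rewrite Rmult_1_r.
          assert (sin eps < d / (S0 + 1)) by lra.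
          apply Rmult_lt_compat_l with (r := S0 + 1) in H; [|lra].
          replace ((S0 + 1) * (d / (S0 + 1))) with d in H by (field; lra). lra. }
        assert (HB : x ^ (2 * S N) * / x <= m0 ^ q).
        { replace (2 * S N)%nat with (S q) by (unfold q; lia). simpl.
          replace (x * x ^ q * / x) with (x ^ q) by (field; lra). apply pow_incr. lra. }
        assert (HBp : 0 <= x ^ (2 * S N) * / x) by (apply Rmult_le_pos; [apply pow_le; lra | left; apply Rinv_0_lt_compat; lra]).
        assert (Htan : 0 <= tan x <= sec x).
        { unfold tan, sec. pose proof (SIN_bound x) as [_ Hs]. assert (sin x > 0) by (apply sin_gt_0; lra).
          split. unfold Rdiv. apply Rmult_le_pos; [lra | left; apply Rinv_0_lt_compat; lra].
          unfold Rdiv. assert (0 < / cos x) by (apply Rinv_0_lt_compat; lra). nra. }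
        assert (HP : s_part E (S N) x <= S0).
        { rewrite s_part_eq by auto. unfold S0. apply Ppoly_mono. lra. }
        assert (c * (x ^ (2 * S N) * / x) * tan x <= c * m0 ^ q * sec x).
        { rewrite Rmult_assoc. rewrite (Rmult_assoc c (m0 ^ q)). apply Rmult_le_compat_l. lra.
          apply Rmult_le_compat; lra. }
        unfold d in Hsec. nra.
Qed.
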